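(* For every integer $d\ge2$ there exists a simply connected domain $\Omega_+\subset\mathbb C$ with boundary $\Gamma^\perp=\partial\Omega_+$ such that: (i) $\Omega_+$ contains $\{x\in\mathbb R:x>-d^{-1}\}$; (ii) $\Gamma^\perp=\Gamma^\perp_{\rm up}\cup\Gamma^\perp_{\rm down}$, where $\Gamma^\perp_{\rm up}$ is a curve from the point $-d^{-1}$ to infinity lying in the upper half-plane except for its endpoint $-d^{-1}$, and $\Gamma^\perp_{\rm down}=\{\bar w:w\in\Gamma^\perp_{\rm up}\}$; (iii) the map $w\mapsto w(w+1)^{d-1}$ is a bijection from $\Omega_+$ onto $\mathbb C\setminus(-\infty,-(r^{\rm sf})^d]$, where $r^{\rm sf}=d^{-1/d}(1-d^{-1})^{1-1/d}$; (iv) the map $w\mapsto w(w+1)^{d-1}$ is a bijection from $\Gamma^\perp_{\rm up}$ onto $(-\infty,-(r^{\rm sf})^d]$; (v) if $w\in\Omega_+\cup\Gamma^\perp$ then $w+c\in\Omega_+$ for every constant $c>0$. *)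

(* Defs.v *)
From Stdlib Require Import Reals.
From Coquelicot Require Import Coquelicot.
Open Scope R_scope.

Definition connected_set (S : C -> Prop) : Prop :=
  forall U V : C -> Prop, open U -> open V ->
    (forall z, S z -> U z \/ V z) ->
    (forall z, S z -> U z -> V z -> False) ->
    (exists z, S z /\ U z) -> (exists z, S z /\ V z) -> False.

Definition domain (S : C -> Prop) : Prop :=
  open S /\ (exists z, S z) /\ connected_set S.

(* Continuous maps on [0,1] (resp. [0,1]^2) are represented by continuous
   maps on R (resp. R*R); every continuous map on [0,1] (resp. [0,1]^2)
   extends to one (by clamping), so nothing is lost. *)
Definition simply_connected (S : C -> Prop) : Prop :=
  forall g : R -> C,
    (forall t, continuous g t) ->
    (forall t, 0 <= t <= 1 -> S (g t)) ->
    g 0 = g 1 ->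
    exists H : R * R -> C,
      (forall p, continuous H p) /\
      (forall s t, 0 <= s <= 1 -> 0 <= t <= 1 -> S (H (s, t))) /\
      (forall t, 0 <= t <= 1 -> H (0, t) = g t) /\
      (forall t, 0 <= t <= 1 -> H (1, t) = H (1, 0)) /\
      (forall s, 0 <= s <= 1 -> H (s, 0) = H (s, 1)).

Definition simply_connected_domain (S : C -> Prop) : Prop :=
  domain S /\ simply_connected S.

Definition closure_C (S : C -> Prop) (z : C) : Prop :=
  forall eps : posreal, exists w, S w /\ ball z eps w.
Definition interior_C (S : C -> Prop) (z : C) : Prop :=
  exists eps : posreal, forall w, ball z eps w -> S w.
Definition boundary_C (S : C -> Prop) (z : C) : Prop :=
  closure_C S z /\ ~ interior_C S z.

(* A curve from the point a to infinity: the image of a continuous injective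
   map gamma : [0, +oo) -> C with gamma 0 = a and |gamma t| -> +oo as
   t -> +oo.  Continuity is required on all of R (harmless, by extension). *)
Definition curve_to_infinity (a : C) (gamma : R -> C) : Prop :=
  (forall t, continuous gamma t) /\
  gamma 0 = a /\
  (forall s t, 0 <= s -> 0 <= t -> gamma s = gamma t -> s = t) /\
  (forall M : R, exists T : R, forall t, T <= t -> M < Cmod (gamma t)).

Definition image_from0 (gamma : R -> C) (z : C) : Prop :=
  exists t, 0 <= t /\ z = gamma t.

Definition fd (d : nat) (w : C) : C := Cmult w (Cpow (Cplus w (RtoC 1)) (d - 1)).

Definition rsf (d : nat) : R :=
  Rpower (INR d) (- / INR d) * Rpower (1 - / INR d) (1 - / INR d).

Definition cut_ray (d : nat) (z : C) : Prop :=
  Im z = 0 /\ Re z <= - (rsf d) ^ d.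

Definition bij_onto (f : C -> C) (A B : C -> Prop) : Prop :=
  (forall w, A w -> B (f w)) /\
  (forall w1 w2, A w1 -> A w2 -> f w1 = f w2 -> w1 = w2) /\
  (forall z, B z -> exists w, A w /\ f w = z).

(* Main.v *)
Require Import Defs.
From Stdlib Require Import Reals Lra Lia Classical.
From Coquelicot Require Import Coquelicot.
Open Scope R_scope.

Definition pol (r t : R) : C := (r * cos t, r * sin t).
Definition th (w : C) : R := PI/2 - atan (Re w / Im w).
Definition C1 (w : C) : C := Cplus w (RtoC 1).
Definition sm (k : nat) (w : C) : R := th w + INR k * th (C1 w).

Lemma pol_mult r1 t1 r2 t2 : Cmult (pol r1 t1) (pol r2 t2) = pol (r1*r2) (t1+t2).
Proof. unfold pol, Cmult; simpl. rewrite cos_plus, sin_plus. f_equal; ring. Qed.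

Lemma pol_pow r t n : Cpow (pol r t) n = pol (r ^ n) (INR n * t).
Proof.
  induction n as [|n IH].
  - simpl. unfold pol. rewrite Rmult_0_l, cos_0, sin_0. unfold RtoC. f_equal; ring.
  - change (Cpow (pol r t) (S n)) with (Cmult (pol r t) (Cpow (pol r t) n)).
    rewrite IH, pol_mult, S_INR. f_equal; simpl; ring.
Qed.

Lemma Cmod_pol r t : 0 <= r -> Cmod (pol r t) = r.
Proof.
  intro Hr. unfold Cmod, pol; cbn [fst snd].
  assert (H := sin2_cos2 t). unfold Rsqr in H.
  replace ((r * cos t) ^ 2 + (r * sin t) ^ 2) with (r ^ 2 * (sin t * sin t + cos t * cos t)) by ring.
  rewrite H, Rmult_1_r.
  apply sqrt_pow2; auto.
Qed.

Lemma th_bounds w : 0 < Im w -> 0 < th w < PI.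
Proof. intros _. unfold th. pose proof (atan_bound (Re w / Im w)). lra. Qed.

Lemma sqrt_1u2 x y : 0 < y -> sqrt (1 + (x/y)²) * y = sqrt (x^2 + y^2).
Proof.
  intro Hy. rewrite <- (sqrt_pow2 y) at 2 by lra.
  rewrite <- sqrt_mult_alt.
  - f_equal. unfold Rsqr. field. lra.
  - pose proof (Rle_0_sqr (x/y)). lra.
Qed.

Lemma th_cos w : 0 < Im w -> Cmod w * cos (th w) = Re w.
Proof.
  intro Hy. unfold th. rewrite cos_shift, sin_atan.
  destruct w as [x y]. unfold Cmod, Re, Im in *; cbn [fst snd] in *.
  rewrite <- (sqrt_1u2 x y Hy).
  assert (0 < sqrt (1 + (x/y)²)).
  { apply sqrt_lt_R0. pose proof (Rle_0_sqr (x/y)). lra. }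
  field. split; lra.
Qed.

Lemma th_sin w : 0 < Im w -> Cmod w * sin (th w) = Im w.
Proof.
  intro Hy. unfold th. rewrite sin_shift, cos_atan.
  destruct w as [x y]. unfold Cmod, Re, Im in *; cbn [fst snd] in *.
  rewrite <- (sqrt_1u2 x y Hy).
  assert (0 < sqrt (1 + (x/y)²)).
  { apply sqrt_lt_R0. pose proof (Rle_0_sqr (x/y)). lra. }
  field. lra.
Qed.

Lemma th_pol w : 0 < Im w -> w = pol (Cmod w) (th w).
Proof.
  intro Hy. unfold pol. rewrite th_cos, th_sin by auto. destruct w; reflexivity.
Qed.

Lemma th_of_pol r t : 0 < r -> 0 < t < PI -> th (pol r t) = t.
Proof.
  intros Hr Ht. unfold th, pol, Re, Im; simpl.
  assert (0 < sin t) by (apply sin_gt_0; lra).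
  replace (r * cos t / (r * sin t)) with (tan (PI/2 - t)).
  - rewrite atan_tan. ring. lra.
  - unfold tan. rewrite sin_shift, cos_shift. field. lra.
Qed.

Lemma Im_pol r t : Im (pol r t) = r * sin t.
Proof. reflexivity. Qed.
Lemma Re_pol r t : Re (pol r t) = r * cos t.
Proof. reflexivity. Qed.

Lemma th_shift w c : 0 < Im w -> 0 < c -> th (Cplus w (RtoC c)) < th w.
Proof.
  intros Hy Hc. unfold th. destruct w as [x y]; unfold Re, Im in *; simpl in *.
  rewrite Rplus_0_r.
  assert (x / y < (x + c) / y).
  { unfold Rdiv. apply Rmult_lt_compat_r. apply Rinv_0_lt_compat; lra. lra. }
  pose proof (atan_increasing _ _ H). lra.
Qed.

Lemma th_shift_le w c : 0 < Im w -> 0 <= c -> th (Cplus w (RtoC c)) <= th w.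
Proof.
  intros Hy Hc. destruct (Req_dec c 0) as [->|]. 
  - destruct w; unfold Cplus, RtoC; simpl. rewrite !Rplus_0_r. lra.
  - left; apply th_shift; lra.
Qed.

Lemma th_scale w l : 0 < l -> th (Cmult (RtoC l) w) = th w.
Proof.
  intro Hl. unfold th. destruct w as [x y]; unfold Cmult, RtoC, Re, Im; simpl.
  destruct (Req_dec y 0) as [->|Hy].
  - unfold Rdiv. rewrite !Rmult_0_l, !Rmult_0_r, Rminus_0_r, Rplus_0_r, Rinv_0, !Rmult_0_r. reflexivity.
  - f_equal. f_equal. field. split; lra.
Qed.

Definition Mf (k : nat) (A B : R) : R := sin A / sin B * (sin (A + B) / sin B) ^ k.
Definition hh (k : nat) (phi A : R) : R := Mf k A (phi - INR (S k) * A).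
Definition gg (k : nat) (phi A : R) : R :=
  ln (sin A) + INR k * ln (sin (phi - INR k * A)) - INR (S k) * ln (sin (phi - INR (S k) * A)).

Lemma lt_div_mul a b c : 0 < c -> a < b / c -> c * a < b.
Proof. intros Hc H. apply (Rmult_lt_compat_l c) in H; auto.
  replace (c * (b / c)) with b in H by (field; lra). exact H. Qed.

Lemma df_pos K sA cA s3 c3 : 0 < K -> 0 < sA -> 0 < s3 -> 0 < sA * c3 + cA * s3 ->
  0 < cA / sA - K * K * (cA * c3 - sA * s3) / (sA * c3 + cA * s3) + (K + 1) * (K + 1) * c3 / s3.
Proof.
  intros HK HA H3 H2.
  assert (E : cA / sA - K * K * (cA * c3 - sA * s3) / (sA * c3 + cA * s3) + (K + 1) * (K + 1) * c3 / s3
    = ((cA * s3 + (K+1) * sA * c3)^2 + K^2 * sA^2 * s3^2) / (sA * (sA * c3 + cA * s3) * s3)).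
  { field. repeat split; lra. }
  rewrite E. apply Rdiv_lt_0_compat.
  - assert (0 < K^2 * sA^2 * s3^2) by (apply Rmult_lt_0_compat; [apply Rmult_lt_0_compat|]; apply pow_lt; lra).
    pose proof (pow2_ge_0 (cA * s3 + (K+1) * sA * c3)). lra.
  - apply Rmult_lt_0_compat; [apply Rmult_lt_0_compat|]; lra.
Qed.

Lemma gg_incr k phi : (1 <= k)%nat -> 0 < phi <= PI ->
  forall x y, 0 < x -> x < y -> y < phi / INR (S k) -> gg k phi x < gg k phi y.
Proof.
  intros Hk Hphi.
  assert (HK : 1 <= INR k) by (apply (le_INR 1); auto).
  assert (HSK : INR (S k) = INR k + 1) by apply S_INR.
  intros x y Hx Hxy Hy. unfold gg. rewrite HSK in *.
  set (K := INR k) in *.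
  assert (Hsk0 : 0 < K + 1) by lra.
  apply (incr_function (fun A => ln (sin A) + K * ln (sin (phi - K * A)) - (K + 1) * ln (sin (phi - (K + 1) * A))) (Finite 0) (Finite (phi / (K + 1)))
    (fun A => cos A / sin A - K * K * cos (phi - K * A) / sin (phi - K * A)
       + (K + 1) * (K + 1) * cos (phi - (K + 1) * A) / sin (phi - (K + 1) * A)));
    try (simpl; auto; fail).
  - intros A HA1 HA2. simpl in HA1, HA2.
    assert (HA: (K + 1) * A < phi) by (apply lt_div_mul; auto).
    assert (s1 : 0 < sin A) by (apply sin_gt_0; nra).
    assert (s2 : 0 < sin (phi - K * A)) by (apply sin_gt_0; nra).
    assert (s3 : 0 < sin (phi - (K + 1) * A)) by (apply sin_gt_0; nra).
    auto_derive.
    + repeat split; auto.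
    + replace (phi + - (K * A)) with (phi - K * A) by ring.
      replace (phi + - ((K + 1) * A)) with (phi - (K + 1) * A) by ring.
      field. repeat split; lra.
  - intros A HA1 HA2. simpl in HA1, HA2.
    assert (HA: (K + 1) * A < phi) by (apply lt_div_mul; auto).
    assert (s1 : 0 < sin A) by (apply sin_gt_0; nra).
    assert (s3 : 0 < sin (phi - (K + 1) * A)) by (apply sin_gt_0; nra).
    assert (s2 : 0 < sin (phi - K * A)) by (apply sin_gt_0; nra).
    replace (phi - K * A) with (A + (phi - (K + 1) * A)) in * by ring.
    rewrite sin_plus in *. rewrite cos_plus.
    apply Rlt_gt. apply df_pos; lra.
Qed.

Lemma hh_ln k phi A : (1 <= k)%nat -> 0 < phi <= PI -> 0 < A -> A < phi / INR (S k) ->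
  0 < hh k phi A /\ ln (hh k phi A) = gg k phi A.
Proof.
  intros Hk Hphi HA1 HA2.
  assert (HK : 1 <= INR k) by (apply (le_INR 1); auto).
  assert (HSK : INR (S k) = INR k + 1) by apply S_INR.
  assert (Hsk0 : 0 < INR (S k)) by lra.
  assert (HA: INR (S k) * A < phi).
    { apply lt_div_mul; auto. }
  assert (s1 : 0 < sin A) by (apply sin_gt_0; nra).
  assert (s3 : 0 < sin (phi - INR (S k) * A)) by (apply sin_gt_0; nra).
  assert (s2 : 0 < sin (phi - INR k * A)) by (apply sin_gt_0; nra).
  unfold hh, Mf, gg.
  replace (A + (phi - INR (S k) * A)) with (phi - INR k * A) by (rewrite HSK; ring).
  assert (0 < sin (phi - INR k * A) / sin (phi - INR (S k) * A)) by (apply Rdiv_lt_0_compat; auto).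
  split.
  - apply Rmult_lt_0_compat. apply Rdiv_lt_0_compat; auto. apply pow_lt; auto.
  - rewrite ln_mult, ln_pow, !ln_div; auto. rewrite HSK. ring.
    apply Rdiv_lt_0_compat; auto. apply pow_lt; auto.
Qed.

Lemma hh_incr k phi : (1 <= k)%nat -> 0 < phi <= PI ->
  forall x y, 0 < x -> x < y -> y < phi / INR (S k) -> hh k phi x < hh k phi y.
Proof.
  intros Hk Hphi x y Hx Hxy Hy.
  assert (Hx' : x < phi / INR (S k)) by lra.
  destruct (hh_ln k phi x Hk Hphi Hx Hx') as [P1 L1].
  destruct (hh_ln k phi y Hk Hphi ltac:(lra) Hy) as [P2 L2].
  pose proof (gg_incr k phi Hk Hphi x y Hx Hxy Hy).
  rewrite <- (exp_ln _ P1), <- (exp_ln _ P2). apply exp_increasing. lra.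
Qed.

Definition P (A B : R) : C := pol (sin A / sin B) (A + B).

Lemma C1_P A B : sin B <> 0 -> C1 (P A B) = pol (sin (A + B) / sin B) A.
Proof.
  intro HB. unfold C1, P, pol, Cplus, RtoC; cbn [fst snd].
  assert (Hb : sin B = sin (A + B) * cos A - cos (A + B) * sin A).
  { rewrite <- sin_minus. f_equal. ring. }
  f_equal.
  - replace (sin A / sin B * cos (A + B) + 1) with ((sin A * cos (A + B) + sin B) / sin B) by (field; auto).
    rewrite Hb at 1. field. auto.
  - field. auto.
Qed.

Lemma fd_eq k w : fd (S k) w = Cmult w (Cpow (C1 w) k).
Proof. unfold fd, C1. replace (S k - 1)%nat with k by lia. reflexivity. Qed.

Lemma fd_P k A B : sin B <> 0 -> fd (S k) (P A B) = pol (Mf k A B) (INR (S k) * A + B).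
Proof.
  intro HB. rewrite fd_eq, C1_P by auto. rewrite pol_pow. unfold P at 1. rewrite pol_mult.
  unfold Mf. f_equal. rewrite S_INR. ring.
Qed.

Lemma P_props A B : 0 < A -> 0 < B -> A + B < PI ->
  0 < Im (P A B) /\ th (P A B) = A + B /\ th (C1 (P A B)) = A /\ 0 < sin A /\ 0 < sin B /\ 0 < sin (A + B).
Proof.
  intros HA HB HAB.
  assert (sA : 0 < sin A) by (apply sin_gt_0; lra).
  assert (sB : 0 < sin B) by (apply sin_gt_0; lra).
  assert (sAB : 0 < sin (A + B)) by (apply sin_gt_0; lra).
  assert (r1 : 0 < sin A / sin B) by (apply Rdiv_lt_0_compat; auto).
  assert (r2 : 0 < sin (A + B) / sin B) by (apply Rdiv_lt_0_compat; auto).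
  repeat split; auto.
  - unfold P. rewrite Im_pol. apply Rmult_lt_0_compat; auto.
  - unfold P. apply th_of_pol; auto; lra.
  - rewrite C1_P by lra. apply th_of_pol; auto; lra.
Qed.

Lemma Im_C1 w : Im (C1 w) = Im w.
Proof. unfold C1, Cplus, RtoC, Im; cbn [fst snd]. ring. Qed.
Lemma Re_C1 w : Re (C1 w) = Re w + 1.
Proof. reflexivity. Qed.

Lemma Cmod_pos_Im w : 0 < Im w -> 0 < Cmod w.
Proof.
  intro H. apply Cmod_gt_0. intro E. rewrite E in H. unfold Im in H; simpl in H. lra.
Qed.

Lemma P_rep w : 0 < Im w ->
  let A := th (C1 w) in let B := th w - th (C1 w) in
  0 < A /\ 0 < B /\ A + B < PI /\ w = P A B.
Proof.
  intros Hy A B.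
  assert (Hy1 : 0 < Im (C1 w)) by (rewrite Im_C1; auto).
  destruct (th_bounds w Hy). destruct (th_bounds (C1 w) Hy1).
  assert (th (C1 w) < th w) by (apply th_shift; lra).
  split; [unfold A; lra|]. split; [unfold B; lra|]. split; [unfold A, B; lra|].
  assert (HAB : A + B = th w) by (unfold A, B; ring).
  unfold P. rewrite HAB.
  assert (sB : 0 < sin B) by (apply sin_gt_0; unfold B, A in *; lra).
  rewrite (th_pol w Hy) at 1. f_equal.
  pose proof (th_cos w Hy) as c0. pose proof (th_sin w Hy) as s0.
  pose proof (th_cos (C1 w) Hy1) as c1. pose proof (th_sin (C1 w) Hy1) as s1.
  rewrite Re_C1 in c1. rewrite Im_C1 in s1.
  pose proof (Cmod_pos_Im w Hy). pose proof (Cmod_pos_Im (C1 w) Hy1).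
  assert (E : Cmod w * sin B * Cmod (C1 w) = sin A * Cmod (C1 w)).
  { unfold B. rewrite sin_minus. fold A.
    transitivity ((Cmod w * sin (th w)) * (Cmod (C1 w) * cos A) - (Cmod w * cos (th w)) * (Cmod (C1 w) * sin A)). ring.
    unfold A. rewrite c0, s0, c1. rewrite <- s1 at 1. unfold A. ring_simplify.
    rewrite s1. rewrite <- s1. ring. }
  apply (Rmult_eq_reg_r (Cmod (C1 w))) in E; [|lra].
  field_simplify_eq; [|lra]. rewrite <- E. ring.
Qed.

Lemma ball_R x e y : ball x e y <-> Rabs (y - x) < e.
Proof. reflexivity. Qed.

Lemma ball_C (z w : C) e : ball z e w <-> Rabs (Re w - Re z) < e /\ Rabs (Im w - Im z) < e.
Proof. destruct z, w. reflexivity. Qed.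

Lemma cont_eps (f : R -> R) x : continuous f x ->
  forall eps, 0 < eps -> exists del, 0 < del /\ forall y, Rabs (y - x) < del -> Rabs (f y - f x) < eps.
Proof.
  intros Hc eps He.
  destruct (proj1 (filterlim_locally f (f x)) Hc (mkposreal eps He)) as [del H].
  exists del. split. apply cond_pos. intros y Hy. apply (H y). exact Hy.
Qed.

Lemma cont_eps_C (F : C -> R) z : continuous F z ->
  forall eps, 0 < eps -> exists del, 0 < del /\ forall w, ball z del w -> Rabs (F w - F z) < eps.
Proof.
  intros Hc eps He.
  destruct (proj1 (filterlim_locally F (F z)) Hc (mkposreal eps He)) as [del H].
  exists del. split. apply cond_pos. intros y Hy. apply (H y). exact Hy.
Qed.

Lemma cpt_of_cont f x : continuous f x -> continuity_pt f x.
Proof. intro H. apply continuity_pt_filterlim. exact H. Qed.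

Lemma cont_exd (f : R -> R) x : ex_derive f x -> continuous f x.
Proof. intro H. exact (@ex_derive_continuous R_AbsRing R_NormedModule f x H). Qed.

Lemma hh_surj k phi R : (1 <= k)%nat -> 0 < phi < PI -> 0 < R ->
  exists A, 0 < A < phi / INR (S k) /\ hh k phi A = R.
Proof.
  intros Hk Hphi HR.
  assert (HK : 1 <= INR k) by (apply (le_INR 1); auto).
  assert (HSK : INR (S k) = INR k + 1) by apply S_INR.
  set (D := INR (S k)) in *.
  assert (HD : 0 < D) by lra.
  set (A0 := phi / D).
  assert (HA0 : 0 < A0) by (apply Rdiv_lt_0_compat; lra).
  assert (HDA0 : D * A0 = phi) by (unfold A0; field; lra).
  assert (HA0pi : A0 < PI).
  { apply (Rmult_lt_reg_l D); auto. rewrite HDA0. nra. }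
  assert (C0 : continuous (hh k phi) 0).
  { apply cont_exd. unfold hh, Mf. fold D. auto_derive.
    replace (phi + - (D * 0)) with phi by ring. assert (0 < sin phi) by (apply sin_gt_0; lra). lra. }
  destruct (cont_eps _ _ C0 R HR) as [d1 [Hd1 H1]].
  assert (Hh0 : hh k phi 0 = 0) by (unfold hh, Mf; rewrite sin_0; unfold Rdiv; ring).
  set (A1 := Rmin (d1/2) (A0/2)).
  assert (HA1 : 0 < A1) by (unfold A1; apply Rmin_glb_lt; lra).
  assert (HA1' : A1 <= A0/2) by apply Rmin_r.
  assert (Hv1 : hh k phi A1 < R).
  { assert (Rabs (A1 - 0) < d1).
    { rewrite Rminus_0_r, Rabs_right by lra. pose proof (Rmin_l (d1/2) (A0/2)). fold A1 in H. lra. }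
    specialize (H1 _ H). rewrite Hh0, Rminus_0_r in H1. apply Rabs_def2 in H1. lra. }
  set (q := fun A => sin (phi - D * A) / sin A * (sin (phi - D * A) / sin (A + (phi - D * A))) ^ k).
  assert (sA0 : 0 < sin A0) by (apply sin_gt_0; lra).
  assert (E0 : A0 + (phi - D * A0) = A0) by (rewrite HDA0; ring).
  assert (Cq : continuous q A0).
  { apply cont_exd. unfold q. auto_derive.
    replace (A0 + (phi + - (D * A0))) with A0 by (rewrite HDA0; ring). lra. }
  assert (Hq0 : q A0 = 0).
  { unfold q. rewrite HDA0. replace (phi - phi) with 0 by ring. rewrite sin_0. unfold Rdiv. ring. }
  destruct (cont_eps _ _ Cq (/R) ltac:(apply Rinv_0_lt_compat; auto)) as [d2 [Hd2 H2]].
  set (A2 := Rmax (A0 - d2/2) (A0/2)).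
  assert (HA2 : A0/2 <= A2) by apply Rmax_r.
  assert (HA2' : A2 < A0) by (unfold A2; apply Rmax_lub_lt; lra).
  assert (Hv2 : R < hh k phi A2).
  { assert (Rabs (A2 - A0) < d2).
    { rewrite Rabs_left by lra. pose proof (Rmax_l (A0 - d2/2) (A0/2)). fold A2 in H. lra. }
    specialize (H2 _ H). rewrite Hq0, Rminus_0_r in H2.
    assert (HA2D : D * A2 < phi) by (rewrite <- HDA0; apply Rmult_lt_compat_l; lra).
    assert (s1 : 0 < sin A2) by (apply sin_gt_0; lra).
    assert (s3 : 0 < sin (phi - D * A2)) by (apply sin_gt_0; nra).
    assert (s2 : 0 < sin (A2 + (phi - D * A2))) by (apply sin_gt_0; nra).
    assert (qpos : 0 < q A2).
    { unfold q. apply Rmult_lt_0_compat. apply Rdiv_lt_0_compat; auto. apply pow_lt. apply Rdiv_lt_0_compat; auto. }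
    rewrite Rabs_right in H2 by lra.
    assert (Hprod : hh k phi A2 * q A2 = 1).
    { unfold hh, Mf, q. fold D. rewrite <- Rmult_assoc.
      replace (sin A2 / sin (phi - D * A2) * (sin (A2 + (phi - D * A2)) / sin (phi - D * A2)) ^ k *
        (sin (phi - D * A2) / sin A2)) with ((sin (A2 + (phi - D * A2)) / sin (phi - D * A2)) ^ k) by (field; lra).
      rewrite <- Rpow_mult_distr. replace (sin (A2 + (phi - D * A2)) / sin (phi - D * A2) *
        (sin (phi - D * A2) / sin (A2 + (phi - D * A2)))) with 1 by (field; lra). apply pow1. }
    apply (Rmult_lt_reg_r (q A2)); auto. rewrite Hprod.
    apply (Rmult_lt_reg_l (/R)). apply Rinv_0_lt_compat; auto.
    rewrite <- Rmult_assoc, Rinv_l, Rmult_1_l, Rmult_1_r by lra. exact H2. }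
  assert (HA12 : A1 < A2).
  { destruct (Rlt_or_le A1 A2) as [|Hle]; auto. assert (Heq : A1 = A2) by lra. rewrite Heq in Hv1. lra. }
  destruct (Ranalysis5.IVT_interv (fun A => hh k phi A - R) A1 A2) as [A [HA HAv]]; auto.
  - intros a Ha. apply continuity_pt_minus; [|apply continuity_pt_const; intros ? ?; auto].
    apply cpt_of_cont. apply cont_exd. unfold hh, Mf. fold D. auto_derive.
    assert (D * a < phi) by (rewrite <- HDA0; apply Rmult_lt_compat_l; lra).
    assert (0 < sin (phi - D * a)) by (apply sin_gt_0; nra).
    replace (phi + - (D * a)) with (phi - D * a) by ring. lra.
  - lra.
  - lra.
  - exists A. split. fold D A0. lra. lra.
Qed.

Fixpoint Sf (n : nat) (A : R) : R :=
  match n with 0%nat => 0 | S m => Sf m A * cos A + cos (INR m * A) end.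

Lemma Sf_sin n A : sin (INR n * A) = Sf n A * sin A.
Proof.
  induction n as [|n IH].
  - simpl. rewrite Rmult_0_l, sin_0. ring.
  - rewrite S_INR. replace ((INR n + 1) * A) with (INR n * A + A) by ring.
    rewrite sin_plus, IH. simpl. ring.
Qed.

Lemma Sf_0 n : Sf n 0 = INR n.
Proof.
  induction n as [|n IH]; simpl; auto.
  rewrite IH, Rmult_0_r, cos_0. destruct n; simpl; ring.
Qed.

Lemma Sf_exd n A : ex_derive (Sf n) A.
Proof.
  induction n as [|n IH]; simpl.
  - apply ex_derive_const.
  - apply (ex_derive_plus (fun A => Sf n A * cos A) (fun A => cos (INR n * A))).
    + apply (ex_derive_mult (Sf n) cos); auto. auto_derive. auto.
    + auto_derive. auto.
Qed.

Lemma Sf_cont n A : continuous (Sf n) A.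
Proof. apply cont_exd, Sf_exd. Qed.

Lemma Sf_pos n A : (1 <= n)%nat -> 0 <= A -> INR n * A < PI -> 0 < Sf n A.
Proof.
  intros Hn HA HnA.
  assert (Hn' : 1 <= INR n) by (apply (le_INR 1); auto).
  destruct (Req_dec A 0) as [->|HA0].
  - rewrite Sf_0. lra.
  - assert (s1 : 0 < sin A) by (apply sin_gt_0; nra).
    assert (s2 : 0 < sin (INR n * A)) by (apply sin_gt_0; nra).
    rewrite Sf_sin in s2. apply (Rmult_lt_reg_r (sin A)); auto. lra.
Qed.

Definition Aof (k : nat) (t : R) : R := PI / INR (S k) * (t ^ 2 / (1 + t ^ 2)).
Definition gam (k : nat) (t : R) : C := pol (/ Sf (S k) (Aof k t)) (PI - INR k * Aof k t).
Definition mm (k : nat) (A : R) : R := / Sf (S k) A * (Sf k A / Sf (S k) A) ^ k.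

Lemma Aof_range k t : 0 <= Aof k t /\ INR (S k) * Aof k t < PI.
Proof.
  unfold Aof. assert (HD : 0 < INR (S k)) by (apply lt_0_INR; lia).
  assert (0 <= t ^ 2) by (apply pow2_ge_0).
  assert (0 <= t ^ 2 / (1 + t ^ 2) < 1).
  { split. apply Rdiv_le_0_compat; lra. apply (Rmult_lt_reg_r (1 + t^2)); [lra|].
    unfold Rdiv. rewrite Rmult_assoc, Rinv_l by lra. lra. }
  pose proof PI_RGT_0.
  split.
  - apply Rmult_le_pos. apply Rlt_le, Rdiv_lt_0_compat; lra. lra.
  - replace (INR (S k) * (PI / INR (S k) * (t ^ 2 / (1 + t ^ 2)))) with (PI * (t ^ 2 / (1 + t ^ 2))) by (field; lra).
    nra.
Qed.

Lemma Aof_0 k : Aof k 0 = 0.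
Proof. unfold Aof. replace (0 ^ 2) with 0 by ring. unfold Rdiv. ring. Qed.

Lemma Sd_pos k t : 0 < Sf (S k) (Aof k t).
Proof. destruct (Aof_range k t). apply Sf_pos; auto. lia. Qed.

Lemma gam_0 k : gam k 0 = RtoC (- / INR (S k)).
Proof.
  unfold gam. rewrite Aof_0, Sf_0, Rmult_0_r, Rminus_0_r. unfold pol, RtoC.
  rewrite cos_PI, sin_PI. f_equal; ring.
Qed.

Lemma cont_pair {U : UniformSpace} (f g : U -> R) x :
  continuous f x -> continuous g x -> continuous (fun y => ((f y, g y) : C)) x.
Proof.
  intros Hf Hg. apply filterlim_locally. intro eps.
  pose proof (proj1 (filterlim_locally f (f x)) Hf eps) as H1.
  pose proof (proj1 (filterlim_locally g (g x)) Hg eps) as H2.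
  apply (filter_imp (fun y => ball (f x) eps (f y) /\ ball (g x) eps (g y))).
  - intros y [a b]. split; auto.
  - apply filter_and; auto.
Qed.

Lemma Aof_cont k t : continuous (Aof k) t.
Proof. apply cont_exd. unfold Aof. auto_derive. pose proof (pow2_ge_0 t). simpl in *. nra. Qed.

Lemma gam_cont k t : continuous (gam k) t.
Proof.
  unfold gam, pol. apply cont_pair.
  - apply (continuous_mult (fun t => / Sf (S k) (Aof k t)) (fun t => cos (PI - INR k * Aof k t))).
    + apply continuous_Rinv_comp. apply (continuous_comp (Aof k) (Sf (S k))). apply Aof_cont. apply Sf_cont.
      pose proof (Sd_pos k t). lra.
    + apply (continuous_comp (Aof k) (fun A => cos (PI - INR k * A))). apply Aof_cont.
      apply cont_exd. auto_derive. auto.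
  - apply (continuous_mult (fun t => / Sf (S k) (Aof k t)) (fun t => sin (PI - INR k * Aof k t))).
    + apply continuous_Rinv_comp. apply (continuous_comp (Aof k) (Sf (S k))). apply Aof_cont. apply Sf_cont.
      pose proof (Sd_pos k t). lra.
    + apply (continuous_comp (Aof k) (fun A => sin (PI - INR k * A))). apply Aof_cont.
      apply cont_exd. auto_derive. auto.
Qed.

Lemma C1_gam_form k A : Sf (S k) A <> 0 ->
  C1 (pol (/ Sf (S k) A) (PI - INR k * A)) = pol (Sf k A / Sf (S k) A) A.
Proof.
  intro H. unfold C1, pol, Cplus, RtoC; cbn [fst snd].
  rewrite Rtrigo_facts.cos_pi_minus, sin_PI_x, Sf_sin.
  f_equal.
  - replace (/ Sf (S k) A * - cos (INR k * A) + 1) with ((Sf (S k) A - cos (INR k * A)) / Sf (S k) A) by (field; auto).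
    simpl Sf at 1. field. auto.
  - field. auto.
Qed.

Lemma fd_gam_form k A : Sf (S k) A <> 0 ->
  fd (S k) (pol (/ Sf (S k) A) (PI - INR k * A)) = RtoC (- mm k A).
Proof.
  intro H. rewrite fd_eq, C1_gam_form by auto. rewrite pol_pow, pol_mult.
  replace (PI - INR k * A + INR k * A) with PI by ring.
  unfold pol, RtoC, mm. rewrite cos_PI, sin_PI. f_equal; ring.
Qed.

Lemma fd_gam k t : fd (S k) (gam k t) = RtoC (- mm k (Aof k t)).
Proof. apply fd_gam_form. pose proof (Sd_pos k t). lra. Qed.

Lemma mm_exd k A : Sf (S k) A <> 0 -> ex_derive (mm k) A.
Proof.
  intro H. unfold mm. auto_derive.
  repeat split; try exact H; try apply (Sf_exd (S k)); apply Sf_exd.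
Qed.

Lemma incr_left (f : R -> R) a b : continuous f a ->
  (forall x y, a < x -> x < y -> y < b -> f x < f y) ->
  forall x, a < x < b -> f a < f x.
Proof.
  intros Hc Hi x Hx.
  set (m := (a + x) / 2).
  assert (Hfm : f m < f x) by (apply Hi; unfold m; lra).
  destruct (Rlt_or_le (f a) (f m)) as [H|H]; [lra|].
  exfalso.
  set (m' := (a + m) / 2).
  assert (Hfm' : f m' < f m) by (apply Hi; unfold m', m in *; lra).
  destruct (cont_eps f a Hc (f m - f m') ltac:(lra)) as [del [Hd Hdel]].
  set (y := Rmin (a + del/2) ((a + m')/2)).
  assert (Hy1 : a < y). { unfold y. apply Rmin_glb_lt. lra. unfold m', m. lra. }
  assert (Hy2 : y <= (a + m') / 2) by apply Rmin_r.
  assert (Hy3 : y <= a + del/2) by apply Rmin_l.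
  assert (Hfy : f y < f m') by (apply Hi; unfold m', m in *; lra).
  assert (Hya : Rabs (y - a) < del) by (rewrite Rabs_right; lra).
  specialize (Hdel y Hya). apply Rabs_def2 in Hdel. lra.
Qed.

Definition rs (k : nat) : R := / INR (S k) * (INR k / INR (S k)) ^ k.

Lemma mm_0 k : mm k 0 = rs k.
Proof. unfold mm, rs. rewrite !Sf_0. reflexivity. Qed.

Lemma mm_hh k A : (1 <= k)%nat -> 0 < A -> INR (S k) * A < PI -> mm k A = hh k PI A.
Proof.
  intros Hk HA HDA.
  assert (HK : 1 <= INR k) by (apply (le_INR 1); auto).
  assert (HSK : INR (S k) = INR k + 1) by apply S_INR.
  assert (s1 : 0 < sin A) by (apply sin_gt_0; nra).
  assert (Sd : 0 < Sf (S k) A) by (apply Sf_pos; auto; lia || lra).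
  unfold mm, hh, Mf.
  rewrite sin_PI_x, Sf_sin.
  replace (A + (PI - INR (S k) * A)) with (PI - INR k * A) by (rewrite HSK; ring).
  rewrite sin_PI_x, Sf_sin. f_equal.
  - field. lra.
  - f_equal. field. lra.
Qed.

Lemma mm_incr k : (1 <= k)%nat -> forall x y, 0 <= x -> x < y -> INR (S k) * y < PI -> mm k x < mm k y.
Proof.
  intros Hk.
  assert (HD : 0 < INR (S k)) by (apply lt_0_INR; lia).
  assert (Hpos : forall x y, 0 < x -> x < y -> y < PI / INR (S k) -> mm k x < mm k y).
  { intros x y Hx Hxy Hy.
    assert (HyD : INR (S k) * y < PI) by (apply lt_div_mul; auto).
    rewrite !mm_hh; auto; try nra.
    apply hh_incr; auto. split; [apply PI_RGT_0|lra]. }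
  intros x y Hx Hxy Hy.
  assert (Hy' : y < PI / INR (S k)).
  { apply (Rmult_lt_reg_l (INR (S k))); auto. replace (INR (S k) * (PI / INR (S k))) with PI by (field; lra). auto. }
  destruct (Req_dec x 0) as [->|Hx0].
  - apply (incr_left (mm k) 0 (PI / INR (S k))).
    + apply cont_exd, mm_exd. rewrite Sf_0. apply not_0_INR. lia.
    + intros; apply Hpos; lra.
    + lra.
  - apply Hpos; lra.
Qed.

Lemma rsf_pow k : (1 <= k)%nat -> rsf (S k) ^ (S k) = rs k.
Proof.
  intros Hk.
  assert (HK : 1 <= INR k) by (apply (le_INR 1); auto).
  assert (HSK : INR (S k) = INR k + 1) by apply S_INR.
  assert (HD : 0 < INR (S k)) by lra.
  assert (H1 : 0 < 1 - / INR (S k)).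
  { assert (/ INR (S k) < 1). { rewrite <- Rinv_1. apply Rinv_lt_contravar; lra. } lra. }
  unfold rsf, rs. rewrite Rpow_mult_distr.
  rewrite <- !Rpower_pow by (apply exp_pos).
  rewrite !Rpower_mult.
  replace (- / INR (S k) * INR (S k)) with (-1) by (field; lra).
  replace ((1 - / INR (S k)) * INR (S k)) with (INR k) by (field_simplify; lra).
  rewrite Rpower_pow by auto. replace (Rpower (INR (S k)) (-1)) with (Rpower (INR (S k)) (Ropp 1)) by (f_equal; ring). rewrite Rpower_Ropp, Rpower_1 by lra.
  f_equal. f_equal. rewrite HSK. field. lra.
Qed.

Lemma Aof_pos k t : 0 < t -> 0 < Aof k t.
Proof.
  intro Ht. unfold Aof. assert (HD : 0 < INR (S k)) by (apply lt_0_INR; lia).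
  pose proof PI_RGT_0. apply Rmult_lt_0_compat. apply Rdiv_lt_0_compat; lra.
  apply Rdiv_lt_0_compat. apply pow_lt; lra. pose proof (pow2_ge_0 t); lra.
Qed.

Lemma Aof_inv k A : 0 <= A -> INR (S k) * A < PI -> exists t, 0 <= t /\ Aof k t = A /\ (0 < A -> 0 < t).
Proof.
  intros HA HDA. assert (HD : 0 < INR (S k)) by (apply lt_0_INR; lia).
  pose proof PI_RGT_0.
  set (u := INR (S k) * A / PI).
  assert (Hu : 0 <= u < 1).
  { unfold u. split. apply Rdiv_le_0_compat; nra. apply (Rmult_lt_reg_r PI); auto.
    unfold Rdiv. rewrite Rmult_assoc, Rinv_l; lra. }
  exists (sqrt (u / (1 - u))).
  assert (Hq : 0 <= u / (1 - u)) by (apply Rdiv_le_0_compat; lra).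
  split; [apply sqrt_pos|]. split.
  - unfold Aof. rewrite pow2_sqrt by auto.
    replace (u / (1 - u) / (1 + u / (1 - u))) with u by (field; lra).
    unfold u. field. lra.
  - intro HA0. apply sqrt_lt_R0. apply Rdiv_lt_0_compat; [unfold u; apply Rdiv_lt_0_compat; nra | lra].
Qed.

Lemma Aof_inj k s t : 0 <= s -> 0 <= t -> Aof k s = Aof k t -> s = t.
Proof.
  intros Hs Ht E. unfold Aof in E. assert (HD : 0 < INR (S k)) by (apply lt_0_INR; lia).
  pose proof PI_RGT_0.
  apply Rmult_eq_reg_l in E; [|apply Rgt_not_eq, Rdiv_lt_0_compat; lra].
  assert (0 <= s^2) by apply pow2_ge_0. assert (0 <= t^2) by apply pow2_ge_0.
  assert (E2 : s ^ 2 = t ^ 2).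
  { assert (Es : s^2 = (s^2/(1+s^2)) * (1 + s^2)) by (field; lra).
    assert (Et : t^2 = (t^2/(1+t^2)) * (1 + t^2)) by (field; lra).
    rewrite E in Es. set (a := t^2/(1+t^2)) in *.
    assert (a < 1). { unfold a. apply (Rmult_lt_reg_r (1 + t^2)); [lra|].
      unfold Rdiv. rewrite Rmult_assoc, Rinv_l by lra. lra. }
    nra. }
  nra.
Qed.

Lemma gam_P k t : (1 <= k)%nat -> 0 < t ->
  gam k t = P (Aof k t) (PI - INR (S k) * Aof k t).
Proof.
  intros Hk Ht. pose proof (Aof_pos k t Ht). destruct (Aof_range k t).
  assert (HSK : INR (S k) = INR k + 1) by apply S_INR.
  assert (1 <= INR (S k)) by (apply (le_INR 1); lia).
  assert (s1 : 0 < sin (Aof k t)) by (apply sin_gt_0; nra).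
  unfold gam, P. rewrite sin_PI_x, Sf_sin. f_equal.
  - field. pose proof (Sd_pos k t). lra.
  - rewrite HSK; ring.
Qed.

Lemma gam_props k t : (1 <= k)%nat -> 0 < t ->
  0 < Im (gam k t) /\ sm k (gam k t) = PI.
Proof.
  intros Hk Ht. pose proof (Aof_pos k t Ht) as HA. destruct (Aof_range k t) as [_ HDA].
  assert (HK : 1 <= INR k) by (apply (le_INR 1); auto).
  assert (HSK : INR (S k) = INR k + 1) by apply S_INR.
  rewrite gam_P by auto.
  destruct (P_props (Aof k t) (PI - INR (S k) * Aof k t)) as (H1 & H2 & H3 & _); try nra.
  split; auto. unfold sm. rewrite H2, H3. rewrite HSK. ring.
Qed.

Lemma sm_PI_gam k w : (1 <= k)%nat -> 0 < Im w -> sm k w = PI -> exists t, 0 < t /\ w = gam k t.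
Proof.
  intros Hk Hy Hs.
  assert (HK : 1 <= INR k) by (apply (le_INR 1); auto).
  assert (HSK : INR (S k) = INR k + 1) by apply S_INR.
  destruct (P_rep w Hy) as (HA & HB & HAB & Ew).
  set (A := th (C1 w)) in *.
  assert (HBv : th w - A = PI - INR (S k) * A) by (unfold sm in Hs; fold A in Hs; rewrite HSK; lra).
  rewrite HBv in Ew.
  destruct (Aof_inv k A) as (t & Ht & EA & Hpos); try lra.
  exists t. split; auto. rewrite gam_P by auto. rewrite EA. exact Ew.
Qed.

Lemma mm_ge k A : (1 <= k)%nat -> 0 <= A -> INR (S k) * A < PI -> rs k <= mm k A.
Proof.
  intros Hk HA HDA. rewrite <- mm_0. destruct (Req_dec A 0) as [->|]; [lra|].
  left. apply mm_incr; auto; lra.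
Qed.

Lemma gam_inj k s t : (1 <= k)%nat -> 0 <= s -> 0 <= t -> gam k s = gam k t -> s = t.
Proof.
  intros Hk Hs Ht E. apply (f_equal (fd (S k))) in E. rewrite !fd_gam in E.
  injection E as E.
  destruct (Aof_range k s), (Aof_range k t).
  apply (Aof_inj k); auto.
  destruct (Rtotal_order (Aof k s) (Aof k t)) as [L|[L|L]]; auto.
  - pose proof (mm_incr k Hk _ _ H L H2). lra.
  - pose proof (mm_incr k Hk _ _ H1 L H0). lra.
Qed.

Lemma gam_infty k : (1 <= k)%nat -> forall M : R, exists T : R, forall t, T <= t -> M < Cmod (gam k t).
Proof.
  intros Hk M.
  assert (HD : 0 < INR (S k)) by (apply lt_0_INR; lia).
  pose proof PI_RGT_0.
  set (A0 := PI / INR (S k)).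
  assert (HA0 : 0 < A0) by (apply Rdiv_lt_0_compat; lra).
  assert (HSd0 : Sf (S k) A0 = 0).
  { assert (0 < sin A0).
    { apply sin_gt_0; auto. unfold A0. apply (Rmult_lt_reg_l (INR (S k))); auto.
      replace (INR (S k) * (PI / INR (S k))) with PI by (field; lra).
      assert (2 <= INR (S k)) by (apply (le_INR 2); lia). nra. }
    pose proof (Sf_sin (S k) A0). replace (INR (S k) * A0) with PI in H1 by (unfold A0; field; lra).
    rewrite sin_PI in H1. symmetry in H1. apply Rmult_integral in H1. destruct H1; lra. }
  set (M' := Rabs M + 1).
  destruct (cont_eps (Sf (S k)) A0 (Sf_cont _ _) (/ M') ltac:(apply Rinv_0_lt_compat; unfold M'; pose proof (Rabs_pos M); lra)) as [del [Hd Hdel]].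
  exists (A0 / del + 1). intros t Ht.
  assert (Hdt : Rabs (Aof k t - A0) < del).
  { assert (0 <= t^2) by apply pow2_ge_0.
    assert (E : Aof k t - A0 = - (A0 / (1 + t^2))) by (unfold Aof; fold A0; field; lra).
    rewrite E, Rabs_Ropp. assert (0 < A0/del) by (apply Rdiv_lt_0_compat; auto).
    assert (t^2 >= t) by (simpl; nra).
    rewrite Rabs_right by (apply Rle_ge, Rdiv_le_0_compat; pose proof (pow2_ge_0 t); lra).
    apply (Rmult_lt_reg_r (1 + t^2)); [pose proof (pow2_ge_0 t); lra|].
    unfold Rdiv at 1. rewrite Rmult_assoc, Rinv_l, Rmult_1_r by (pose proof (pow2_ge_0 t); lra).
    assert (A0 < del * (A0 / del + 1)) by (field_simplify; lra). nra. }
  specialize (Hdel _ Hdt). rewrite HSd0, Rminus_0_r in Hdel.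
  pose proof (Sd_pos k t) as Sp. rewrite Rabs_right in Hdel by lra.
  unfold gam. rewrite Cmod_pol by (left; apply Rinv_0_lt_compat; auto).
  assert (M < M') by (unfold M'; pose proof (Rle_abs M); lra).
  assert (M' < / Sf (S k) (Aof k t)).
  { rewrite <- (Rinv_inv M'). apply Rinv_lt_contravar; auto.
    apply Rmult_lt_0_compat; auto. apply Rinv_0_lt_compat. unfold M'. pose proof (Rabs_pos M). lra. }
  lra.
Qed.

Lemma mm_surj k y : (1 <= k)%nat -> rs k <= y -> exists A, 0 <= A /\ INR (S k) * A < PI /\ mm k A = y.
Proof.
  intros Hk Hy.
  assert (HK : 1 <= INR k) by (apply (le_INR 1); auto).
  assert (HD : 0 < INR (S k)) by (apply lt_0_INR; lia).
  pose proof PI_RGT_0.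
  destruct (Req_dec y (rs k)) as [->|Hne].
  { exists 0. split; [lra|]. split; [lra|]. apply mm_0. }
  assert (Hrs : 0 < rs k). { unfold rs. apply Rmult_lt_0_compat. apply Rinv_0_lt_compat; auto. apply pow_lt. apply Rdiv_lt_0_compat; lra. }
  assert (Hy' : rs k < y) by lra.
  set (A0 := PI / INR (S k)).
  assert (HA0 : 0 < A0) by (apply Rdiv_lt_0_compat; lra).
  assert (HDA0 : INR (S k) * A0 = PI) by (unfold A0; field; lra).
  assert (H2D : 2 <= INR (S k)) by (apply (le_INR 2); lia).
  assert (sA0 : 0 < sin A0) by (apply sin_gt_0; auto; apply (Rmult_lt_reg_l (INR (S k))); auto; rewrite HDA0; nra).
  assert (HSd0 : Sf (S k) A0 = 0).
  { pose proof (Sf_sin (S k) A0) as E. rewrite HDA0, sin_PI in E. symmetry in E. apply Rmult_integral in E. destruct E; lra. }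
  assert (HSk0 : 0 < Sf k A0).
  { apply Sf_pos; auto. lra. rewrite <- HDA0. rewrite S_INR. nra. }
  set (q := fun A => Sf (S k) A * (Sf (S k) A / Sf k A) ^ k).
  assert (Cq : continuous q A0).
  { apply cont_exd. unfold q. auto_derive. repeat split; try apply (Sf_exd (S k)); try apply Sf_exd. lra. }
  assert (Hq0 : q A0 = 0) by (unfold q; rewrite HSd0; ring).
  destruct (cont_eps _ _ Cq (/y) ltac:(apply Rinv_0_lt_compat; lra)) as [d2 [Hd2 H2]].
  destruct (cont_eps _ _ (Sf_cont k A0) (Sf k A0) HSk0) as [d3 [Hd3 H3]].
  set (A2 := Rmax (A0 - Rmin d2 d3 / 2) (A0/2)).
  assert (HA2 : A0/2 <= A2) by apply Rmax_r.
  assert (Hm : 0 < Rmin d2 d3) by (apply Rmin_glb_lt; auto).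
  assert (HA2' : A2 < A0) by (unfold A2; apply Rmax_lub_lt; lra).
  assert (Hdist : Rabs (A2 - A0) < Rmin d2 d3).
  { rewrite Rabs_left by lra. pose proof (Rmax_l (A0 - Rmin d2 d3 / 2) (A0/2)). fold A2 in H0. lra. }
  assert (HDA2 : INR (S k) * A2 < PI) by (rewrite <- HDA0; apply Rmult_lt_compat_l; lra).
  assert (Sd2 : 0 < Sf (S k) A2) by (apply Sf_pos; auto; lia || lra).
  assert (Sk2 : 0 < Sf k A2).
  { specialize (H3 A2 ltac:(pose proof (Rmin_r d2 d3); lra)). apply Rabs_def2 in H3. lra. }
  assert (Hv2 : y < mm k A2).
  { specialize (H2 A2 ltac:(pose proof (Rmin_l d2 d3); lra)). rewrite Hq0, Rminus_0_r in H2.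
    assert (qpos : 0 < q A2) by (unfold q; apply Rmult_lt_0_compat; auto; apply pow_lt, Rdiv_lt_0_compat; auto).
    rewrite Rabs_right in H2 by lra.
    assert (Hprod : mm k A2 * q A2 = 1).
    { unfold mm, q.
      replace (/ Sf (S k) A2 * (Sf k A2 / Sf (S k) A2) ^ k * (Sf (S k) A2 * (Sf (S k) A2 / Sf k A2) ^ k))
        with ((Sf k A2 / Sf (S k) A2) ^ k * (Sf (S k) A2 / Sf k A2) ^ k) by (field; lra).
      rewrite <- Rpow_mult_distr. replace (Sf k A2 / Sf (S k) A2 * (Sf (S k) A2 / Sf k A2)) with 1 by (field; lra).
      apply pow1. }
    apply (Rmult_lt_reg_r (q A2)); auto. rewrite Hprod.
    apply (Rmult_lt_reg_l (/y)). apply Rinv_0_lt_compat; lra.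
    rewrite <- Rmult_assoc, Rinv_l, Rmult_1_l, Rmult_1_r by lra. exact H2. }
  destruct (Ranalysis5.IVT_interv (fun A => mm k A - y) 0 A2) as [A [HA HAv]].
  - intros a Ha. apply continuity_pt_minus; [|apply continuity_pt_const; intros ? ?; auto].
    apply cpt_of_cont, cont_exd, mm_exd.
    assert (INR (S k) * a < PI) by (rewrite <- HDA0; apply Rmult_lt_compat_l; lra).
    assert (0 < Sf (S k) a) by (apply Sf_pos; auto; lia || lra). lra.
  - lra.
  - rewrite mm_0. lra.
  - lra.
  - exists A. split; [lra|]. split; [|lra]. rewrite <- HDA0. apply Rmult_lt_compat_l; lra.
Qed.

Lemma is_derive_atan x : is_derive atan x (/ (1 + x ^ 2)).
Proof. apply is_derive_Reals, Ratan.derivable_pt_lim_atan. Qed.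

Lemma Derive_atan x : Derive atan x = / (1 + x ^ 2).
Proof. apply is_derive_unique, is_derive_atan. Qed.

Lemma ex_derive_atan x : ex_derive atan x.
Proof. eexists; apply is_derive_atan. Qed.

Lemma nonneg_deriv (g g' : R -> R) b : 0 <= b -> g 0 = 0 ->
  (forall x, is_derive g x (g' x)) -> (forall x, 0 <= x -> 0 <= g' x) -> 0 <= g b.
Proof.
  intros Hb H0 Hd Hpos.
  destruct (MVT_gen g 0 b g') as [c [Hc E]].
  - intros x _. apply Hd.
  - intros x _. apply cpt_of_cont, cont_exd. eexists; apply Hd.
  - rewrite Rmin_left, Rmax_right in Hc by lra. rewrite H0 in E.
    assert (0 <= g' c * (b - 0)) by (apply Rmult_le_pos; [apply Hpos|]; lra). lra.
Qed.

Lemma atan_le_id u : 0 <= u -> atan u <= u.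
Proof.
  intro Hu.
  assert (0 <= (fun u => u - atan u) u).
  { apply (nonneg_deriv (fun u => u - atan u) (fun x => 1 - / (1 + x ^ 2))); auto.
    - simpl. rewrite atan_0. ring.
    - intro x. auto_derive; [auto|]. replace (x * (x * 1)) with (x ^ 2) by ring. ring.
    - intros x _. assert (0 <= x ^ 2) by apply pow2_ge_0.
      assert (/ (1 + x^2) <= 1). { rewrite <- Rinv_1. apply Rinv_le_contravar; lra. } lra. }
  simpl in H. lra.
Qed.

Lemma atan_mul K a : 1 <= K -> 0 <= a -> atan (K * a) <= K * atan a.
Proof.
  intros HK Ha.
  assert (0 <= (fun a => K * atan a - atan (K * a)) a).
  { apply (nonneg_deriv (fun a => K * atan a - atan (K * a)) (fun x => K * / (1 + x ^ 2) - K * / (1 + (K * x) ^ 2))); auto.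
    - simpl. rewrite Rmult_0_r, atan_0. ring.
    - intro x. auto_derive; [auto|]. replace (x * (x * 1)) with (x ^ 2) by ring.
      replace (K * x * (K * x * 1)) with ((K * x) ^ 2) by ring. ring.
    - intros x _. assert (0 <= x ^ 2) by apply pow2_ge_0.
      assert (0 <= (K^2 - 1) * x^2) by (apply Rmult_le_pos; nra).
      assert (1 + x^2 <= 1 + (K * x) ^ 2) by (rewrite Rpow_mult_distr; nra).
      assert (/ (1 + (K * x) ^ 2) <= / (1 + x^2)) by (apply Rinv_le_contravar; lra).
      nra. }
  simpl in H. lra.
Qed.

Lemma th_pos_re w : 0 < Im w -> 0 < Re w -> th w = atan (Im w / Re w).
Proof.
  intros Hy Hx. unfold th. replace (Im w / Re w) with (/ (Re w / Im w)) by (field; lra).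
  rewrite atan_inv. ring. apply Rdiv_lt_0_compat; auto.
Qed.

Lemma th_neg_re w : 0 < Im w -> Re w < 0 -> PI - th w = atan (Im w / - Re w).
Proof.
  intros Hy Hx. unfold th. replace (Im w / - Re w) with (/ (- Re w / Im w)) by (field; lra).
  rewrite atan_inv. replace (- Re w / Im w) with (- (Re w / Im w)) by (field; lra).
  rewrite atan_opp. lra. apply Rdiv_lt_0_compat; lra.
Qed.

Lemma th_le_half w : 0 < Im w -> 0 <= Re w -> th w <= PI / 2.
Proof.
  intros Hy Hx. unfold th. assert (0 <= Re w / Im w) by (apply Rdiv_le_0_compat; lra).
  assert (0 <= atan (Re w / Im w)).
  { destruct H. left. rewrite <- atan_0. apply atan_increasing; auto. rewrite <- H, atan_0. lra. }
  lra.
Qed.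

Lemma th_ge_half w : 0 < Im w -> Re w <= 0 -> PI / 2 <= th w.
Proof.
  intros Hy Hx. unfold th. assert (Re w / Im w <= 0).
  { unfold Rdiv. assert (0 < / Im w) by (apply Rinv_0_lt_compat; auto). nra. }
  assert (atan (Re w / Im w) <= 0).
  { destruct H. left. rewrite <- atan_0. apply atan_increasing; auto. rewrite H, atan_0. lra. }
  lra.
Qed.

Definition Cond (k : nat) (w : C) : Prop :=
  (0 < Re w + 1 /\ INR k ^ 2 * (Re w ^ 2 + Im w ^ 2) < (Re w + 1) ^ 2) \/
  (0 < Re w /\ INR (S k) * Rabs (Im w) < PI * Re w).

Lemma Cond_sm k w : (1 <= k)%nat -> 0 < Im w -> Cond k w -> sm k w < PI.
Proof.
  intros Hk Hy HC.
  assert (HK : 1 <= INR k) by (apply (le_INR 1); auto).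
  assert (HSK : INR (S k) = INR k + 1) by apply S_INR.
  assert (Hy1 : 0 < Im (C1 w)) by (rewrite Im_C1; auto).
  destruct (th_bounds w Hy) as [T0 T1]. destruct (th_bounds (C1 w) Hy1) as [T2 T3].
  unfold sm. destruct HC as [[H1 H2]|[H1 H2]].
  - assert (E1 : th (C1 w) = atan (Im w / (Re w + 1))) by (rewrite th_pos_re, Im_C1, Re_C1; auto; rewrite Re_C1; lra).
    assert (A1 : th (C1 w) <= Im w / (Re w + 1)) by (rewrite E1; apply atan_le_id; apply Rdiv_le_0_compat; lra).
    pose proof (Cmod_pos_Im w Hy) as Hm.
    assert (Hmod : INR k * Cmod w < Re w + 1).
    { assert (Cmod w ^ 2 = Re w ^ 2 + Im w ^ 2) by apply Cmod2_alt.
      assert ((INR k * Cmod w) ^ 2 < (Re w + 1) ^ 2) by (rewrite Rpow_mult_distr; nra).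
      apply Rsqr_incrst_0; unfold Rsqr; try nra. }
    assert (Hsin : Im w / Cmod w = sin (PI - th w)).
    { rewrite sin_PI_x. rewrite <- (th_sin w Hy). field. lra. }
    assert (Hs2 : sin (PI - th w) < PI - th w) by (apply sin_lt_x; lra).
    assert (INR k * (Im w / (Re w + 1)) < Im w / Cmod w).
    { unfold Rdiv. apply (Rmult_lt_reg_r (Cmod w * (Re w + 1))). nra.
      replace (INR k * (Im w * / (Re w + 1)) * (Cmod w * (Re w + 1))) with (Im w * (INR k * Cmod w)) by (field; lra).
      replace (Im w * / Cmod w * (Cmod w * (Re w + 1))) with (Im w * (Re w + 1)) by (field; lra).
      nra. }
    nra.
  - rewrite Rabs_right in H2 by lra.
    assert (E0 : th w = atan (Im w / Re w)) by (apply th_pos_re; auto).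
    assert (A0 : th w <= Im w / Re w) by (rewrite E0; apply atan_le_id; apply Rdiv_le_0_compat; lra).
    assert (th (C1 w) < th w) by (apply th_shift; lra).
    assert (INR (S k) * (Im w / Re w) < PI).
    { unfold Rdiv. apply (Rmult_lt_reg_r (Re w)); auto. rewrite Rmult_assoc, Rmult_assoc, Rinv_l, Rmult_1_r by lra. lra. }
    rewrite HSK in *. nra.
Qed.

Lemma left_sm k w : (1 <= k)%nat -> 0 < Im w -> Re w <= - / INR (S k) -> PI <= sm k w.
Proof.
  intros Hk Hy Hx.
  assert (HK : 1 <= INR k) by (apply (le_INR 1); auto).
  assert (HSK : INR (S k) = INR k + 1) by apply S_INR.
  assert (Hy1 : 0 < Im (C1 w)) by (rewrite Im_C1; auto).
  assert (Hd : 0 < / INR (S k)) by (apply Rinv_0_lt_compat; lra).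
  destruct (th_bounds w Hy) as [T0 T1]. destruct (th_bounds (C1 w) Hy1) as [T2 T3].
  assert (Hlt : th (C1 w) < th w) by (apply th_shift; lra).
  unfold sm.
  destruct (Rle_or_lt (Re w) (-1)) as [Hx1|Hx1].
  - assert (PI/2 <= th (C1 w)) by (apply th_ge_half; auto; rewrite Re_C1; lra). nra.
  - assert (E1 : th (C1 w) = atan (Im w / (Re w + 1))) by (rewrite th_pos_re, Im_C1, Re_C1; auto; rewrite Re_C1; lra).
    assert (E0 : PI - th w = atan (Im w / - Re w)) by (apply th_neg_re; auto; lra).
    assert (Hb : Im w / - Re w <= INR k * (Im w / (Re w + 1))).
    { assert (Hx2 : (Re w + 1) <= INR k * (- Re w)).
      { assert (INR (S k) * Re w <= -1).
        { apply (Rmult_le_compat_l (INR (S k))) in Hx; [|lra].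
          replace (INR (S k) * - / INR (S k)) with (-1) in Hx by (field; lra). lra. }
        rewrite HSK in *; nra. }
      assert (0 < - Re w) by lra.
      unfold Rdiv. apply (Rmult_le_reg_r ((- Re w) * (Re w + 1))). nra.
      replace (Im w * / - Re w * (- Re w * (Re w + 1))) with (Im w * (Re w + 1)) by (field; lra).
      replace (INR k * (Im w * / (Re w + 1)) * (- Re w * (Re w + 1))) with (Im w * (INR k * - Re w)) by (field; lra).
      nra. }
    assert (atan (Im w / - Re w) <= atan (INR k * (Im w / (Re w + 1)))).
    { destruct Hb as [Hb|Hb]. left; apply atan_increasing; auto. rewrite Hb; lra. }
    pose proof (atan_mul (INR k) (Im w / (Re w + 1)) HK ltac:(apply Rdiv_le_0_compat; lra)).
    rewrite E1. lra.
Qed.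

Definition Omega (k : nat) (w : C) : Prop :=
  (Im w = 0 /\ - / INR (S k) < Re w) \/ (0 < Im w /\ sm k w < PI) \/ (Im w < 0 /\ sm k (Cconj w) < PI).

Lemma cont_Re (w : C) : continuous (fun u : C => Re u) w.
Proof. destruct w. apply continuous_fst. Qed.
Lemma cont_Im (w : C) : continuous (fun u : C => Im u) w.
Proof. destruct w. apply continuous_snd. Qed.

Lemma cont_atan x : continuous atan x.
Proof. apply cont_exd. apply ex_derive_atan. Qed.

Lemma cont_th_shift (c : R) (w : C) : Im w <> 0 -> continuous (fun u => th (Cplus u (RtoC c))) w.
Proof.
  intro Hy. unfold th, Cplus, RtoC, Re, Im; cbn [fst snd].
  apply (continuous_plus (fun _ : C => PI / 2) (fun u : C => opp (atan ((fst u + c) / (snd u + 0))))).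
  apply continuous_const.
  apply (continuous_opp (fun u : C => atan ((fst u + c) / (snd u + 0)))).
  apply (continuous_comp (fun u : C => (fst u + c) / (snd u + 0)) atan); [|apply cont_atan].
  apply (continuous_mult (fun u : C => fst u + c) (fun u : C => / (snd u + 0))).
  - apply (continuous_plus (fun u : C => fst u) (fun _ : C => c)). apply cont_Re. apply continuous_const.
  - apply (continuous_comp (fun u : C => snd u + 0) (fun x => / x)).
    + apply (continuous_plus (fun u : C => snd u) (fun _ : C => 0)). apply cont_Im. apply continuous_const.
    + apply continuous_Rinv. unfold Im in Hy. lra.
Qed.

Lemma th_plus0 w : th (Cplus w (RtoC 0)) = th w.
Proof. unfold th, Cplus, RtoC, Re, Im; cbn [fst snd]. rewrite !Rplus_0_r. reflexivity. Qed.

Lemma cont_sm k w : Im w <> 0 -> continuous (sm k) w.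
Proof.
  intro Hy. unfold sm.
  apply (continuous_plus (fun u => th u) (fun u => INR k * th (C1 u))).
  - apply (continuous_ext (fun u => th (Cplus u (RtoC 0)))). intro; apply th_plus0. apply cont_th_shift; auto.
  - apply (continuous_mult (fun _ : C => INR k) (fun u => th (C1 u))). apply continuous_const.
    unfold C1. apply cont_th_shift; auto.
Qed.

Lemma cont_pow_comp (f : C -> R) n w : continuous f w -> continuous (fun u => f u ^ n) w.
Proof.
  intro H. apply (continuous_comp f (fun x => x ^ n)); auto. apply cont_exd. auto_derive. auto.
Qed.

Lemma cont_F2 k w : continuous (fun u : C => (Re u + 1) ^ 2 - INR k ^ 2 * (Re u ^ 2 + Im u ^ 2)) w.
Proof.
  apply (continuous_minus (fun u : C => (Re u + 1) ^ 2) (fun u => INR k ^ 2 * (Re u ^ 2 + Im u ^ 2))).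
  - apply (cont_pow_comp (fun u => Re u + 1)).
    apply (continuous_plus (fun u : C => Re u) (fun _ => 1)). apply cont_Re. apply continuous_const.
  - apply (continuous_mult (fun _ : C => INR k ^ 2) (fun u => Re u ^ 2 + Im u ^ 2)). apply continuous_const.
    apply (continuous_plus (fun u : C => Re u ^ 2) (fun u => Im u ^ 2)).
    apply (cont_pow_comp (fun u => Re u)). apply cont_Re.
    apply (cont_pow_comp (fun u => Im u)). apply cont_Im.
Qed.

Lemma near_pos (F : C -> R) z : continuous F z -> 0 < F z -> exists eps, 0 < eps /\ forall u, ball z eps u -> 0 < F u.
Proof.
  intros Hc Hp. destruct (cont_eps_C F z Hc (F z) Hp) as [e [He H]].
  exists e. split; auto. intros u Hu. specialize (H u Hu). apply Rabs_def2 in H. lra.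
Qed.

Lemma sm_conj_conj k w : sm k (Cconj (Cconj w)) = sm k w.
Proof. rewrite Cconj_conj. reflexivity. Qed.

Lemma Omega_conj k w : Omega k (Cconj w) <-> Omega k w.
Proof.
  unfold Omega. rewrite im_conj, re_conj, sm_conj_conj. split; intros [H|[H|H]]; lra.
Qed.

Lemma ball_conj (z u : C) e : ball z e u -> ball (Cconj z) e (Cconj u).
Proof.
  rewrite !ball_C, !im_conj, !re_conj. intros [H1 H2]. split; auto.
  replace (- Im u - - Im z) with (- (Im u - Im z)) by ring. rewrite Rabs_Ropp. auto.
Qed.

Lemma Cond_conj k w : Cond k w -> Cond k (Cconj w).
Proof. unfold Cond. rewrite im_conj, re_conj, Rabs_Ropp. replace ((- Im w) ^ 2) with (Im w ^ 2) by ring. auto. Qed.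

Lemma Omega_open_pt k w : (1 <= k)%nat -> Omega k w -> exists eps, 0 < eps /\ forall u, ball w eps u -> Omega k u.
Proof.
  intros Hk Hw.
  assert (HK : 1 <= INR k) by (apply (le_INR 1); auto).
  assert (HSK : INR (S k) = INR k + 1) by apply S_INR.
  assert (Hup : forall w, 0 < Im w -> sm k w < PI -> exists eps, 0 < eps /\ forall u, ball w eps u -> Omega k u).
  { clear w Hw. intros w Hy Hs.
    destruct (near_pos (fun u => PI - sm k u) w) as [e1 [He1 H1]].
    { apply (continuous_minus (fun _ => PI) (sm k)). apply continuous_const. apply cont_sm; lra. } lra.
    exists (Rmin e1 (Im w)). split. apply Rmin_glb_lt; auto.
    intros u Hu. right; left. split.
    - apply (proj1 (ball_C _ _ _)) in Hu. destruct Hu as [_ Hu]. pose proof (Rmin_r e1 (Im w)). apply Rabs_def2 in Hu. lra.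
    - assert (ball w e1 u).
      { apply (proj1 (ball_C _ _ _)) in Hu. apply (proj2 (ball_C _ _ _)). pose proof (Rmin_l e1 (Im w)). destruct Hu; split; lra. }
      specialize (H1 u H). lra. }
  destruct Hw as [[Hy Hx]|[[Hy Hs]|[Hy Hs]]].
  -
    set (x := Re w) in *.
    assert (HD : 0 < INR (S k)) by lra.
    assert (Hd : 0 < / INR (S k)) by (apply Rinv_0_lt_compat; auto).
    assert (HC : exists eps, 0 < eps /\ forall u, ball w eps u -> Cond k u).
    { destruct (Rlt_or_le (INR k ^ 2 * (x ^ 2 + 0 ^ 2)) ((x + 1) ^ 2)) as [Hc|Hc].
      - destruct (near_pos (fun u => Re u + 1) w) as [e1 [He1 H1]].
        { apply (continuous_plus (fun u : C => Re u) (fun _ => 1)). apply cont_Re. apply continuous_const. }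
        { fold x. assert (- / INR (S k) >= -1). { assert (/ INR (S k) <= 1). { rewrite <- Rinv_1. apply Rinv_le_contravar; lra. } lra. } lra. }
        destruct (near_pos (fun u => (Re u + 1) ^ 2 - INR k ^ 2 * (Re u ^ 2 + Im u ^ 2)) w) as [e2 [He2 H2]].
        { apply cont_F2. }
        { fold x. rewrite Hy. lra. }
        exists (Rmin e1 e2). split. apply Rmin_glb_lt; auto.
        intros u Hu. left. split.
        + apply H1. apply (proj1 (ball_C _ _ _)) in Hu. apply (proj2 (ball_C _ _ _)). pose proof (Rmin_l e1 e2). destruct Hu; split; lra.
        + assert (0 < (Re u + 1) ^ 2 - INR k ^ 2 * (Re u ^ 2 + Im u ^ 2)); [|lra].
          apply H2. apply (proj1 (ball_C _ _ _)) in Hu. apply (proj2 (ball_C _ _ _)). pose proof (Rmin_r e1 e2). destruct Hu; split; lra.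
      - assert (Hx0 : 0 < x).
        { destruct (Rlt_or_le 0 x) as [|Hx0]; auto. exfalso.
          assert (INR k * (- x) < x + 1).
          { apply (Rmult_lt_compat_l (INR (S k))) in Hx; auto.
            replace (INR (S k) * - / INR (S k)) with (-1) in Hx by (field; lra). rewrite HSK in Hx. nra. }
          assert (0 <= INR k * (- x)) by nra.
          assert ((INR k * (- x)) ^ 2 < (x + 1) ^ 2) by nra.
          rewrite Rpow_mult_distr in H1. replace ((- x) ^ 2) with (x ^ 2 + 0 ^ 2) in H1 by ring. lra. }
        destruct (near_pos (fun u => Re u) w) as [e1 [He1 H1]]. apply cont_Re. auto.
        destruct (near_pos (fun u => PI * Re u - INR (S k) * Rabs (Im u)) w) as [e2 [He2 H2]].
        { apply (continuous_minus (fun u => PI * Re u) (fun u => INR (S k) * Rabs (Im u))).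
          - apply (continuous_mult (fun _ : C => PI) (fun u => Re u)). apply continuous_const. apply cont_Re.
          - apply (continuous_mult (fun _ : C => INR (S k)) (fun u => Rabs (Im u))). apply continuous_const.
            apply (continuous_comp (fun u : C => Im u) Rabs). apply cont_Im. apply continuous_Rabs. }
        { fold x. rewrite Hy, Rabs_R0. pose proof PI_RGT_0. nra. }
        exists (Rmin e1 e2). split. apply Rmin_glb_lt; auto.
        intros u Hu. right. split.
        + apply H1. apply (proj1 (ball_C _ _ _)) in Hu. apply (proj2 (ball_C _ _ _)). pose proof (Rmin_l e1 e2). destruct Hu; split; lra.
        + assert (0 < PI * Re u - INR (S k) * Rabs (Im u)); [|lra].
          apply H2. apply (proj1 (ball_C _ _ _)) in Hu. apply (proj2 (ball_C _ _ _)). pose proof (Rmin_r e1 e2). destruct Hu; split; lra. }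
    destruct HC as [e1 [He1 HC]].
    exists (Rmin e1 (x + / INR (S k))). split. apply Rmin_glb_lt; lra.
    intros u Hu.
    assert (Hu1 : ball w e1 u).
    { apply (proj1 (ball_C _ _ _)) in Hu. apply (proj2 (ball_C _ _ _)). pose proof (Rmin_l e1 (x + / INR (S k))). destruct Hu; split; lra. }
    destruct (Rtotal_order (Im u) 0) as [Hn|[Hz|Hp]].
    + right; right. split; auto. apply Cond_sm; auto. rewrite im_conj; lra. apply Cond_conj; auto.
    + left. split; auto. apply (proj1 (ball_C _ _ _)) in Hu. destruct Hu as [Hu _]. fold x in Hu.
      pose proof (Rmin_r e1 (x + / INR (S k))). apply Rabs_def2 in Hu. lra.
    + right; left. split; auto. apply Cond_sm; auto.
  - apply Hup; auto.
  - destruct (Hup (Cconj w)) as [e [He H]]; auto. rewrite im_conj; lra.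
    exists e. split; auto. intros u Hu. apply Omega_conj. apply H. apply ball_conj; auto.
Qed.

Lemma C1_shift w c : C1 (Cplus w (RtoC c)) = Cplus (C1 w) (RtoC c).
Proof. unfold C1, Cplus, RtoC; cbn [fst snd]. f_equal; ring. Qed.

Lemma Im_shift w c : Im (Cplus w (RtoC c)) = Im w.
Proof. unfold Cplus, RtoC, Im; cbn [fst snd]. ring. Qed.
Lemma Re_shift w c : Re (Cplus w (RtoC c)) = Re w + c.
Proof. reflexivity. Qed.

Lemma conj_shift w c : Cconj (Cplus w (RtoC c)) = Cplus (Cconj w) (RtoC c).
Proof. unfold Cconj, Cplus, RtoC; cbn [fst snd]. f_equal; ring. Qed.

Lemma sm_shift k w c : 0 < Im w -> 0 < c -> sm k (Cplus w (RtoC c)) < sm k w.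
Proof.
  intros Hy Hc. unfold sm. rewrite C1_shift.
  assert (th (Cplus w (RtoC c)) < th w) by (apply th_shift; auto).
  assert (th (Cplus (C1 w) (RtoC c)) < th (C1 w)) by (apply th_shift; auto; rewrite Im_C1; auto).
  assert (0 <= INR k) by apply pos_INR. nra.
Qed.

Lemma shift_up k w c : 0 < Im w -> sm k w <= PI -> 0 < c -> Omega k (Cplus w (RtoC c)).
Proof.
  intros Hy Hs Hc. right; left. rewrite Im_shift. split; auto.
  pose proof (sm_shift k w c Hy Hc). lra.
Qed.

Lemma shift_Omega k w c : Omega k w -> 0 < c -> Omega k (Cplus w (RtoC c)).
Proof.
  intros Hw Hc. destruct Hw as [[Hy Hx]|[[Hy Hs]|[Hy Hs]]].
  - left. rewrite Im_shift, Re_shift. split; auto. lra.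
  - apply shift_up; auto. lra.
  - apply Omega_conj. rewrite conj_shift. apply shift_up; auto. rewrite im_conj; lra. lra.
Qed.

Lemma scale_props w l : 0 < l -> Im (Cmult (RtoC l) w) = l * Im w /\ Re (Cmult (RtoC l) w) = l * Re w.
Proof. intros _. unfold Cmult, RtoC, Im, Re; cbn [fst snd]. split; ring. Qed.

Lemma sm_scale k w l : 0 < Im w -> 0 < l <= 1 -> sm k (Cmult (RtoC l) w) <= sm k w.
Proof.
  intros Hy Hl. unfold sm. rewrite th_scale by lra.
  assert (th (C1 (Cmult (RtoC l) w)) <= th (C1 w)).
  { unfold th. rewrite !Re_C1, !Im_C1. destruct (scale_props w l ltac:(lra)) as [E1 E2]. rewrite E1, E2.
    assert ((Re w + 1) / Im w <= (l * Re w + 1) / (l * Im w)).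
    { replace ((l * Re w + 1) / (l * Im w)) with ((Re w + 1) / Im w + (1 - l) / (l * Im w)) by (field; split; lra).
      assert (0 <= (1 - l) / (l * Im w)) by (apply Rdiv_le_0_compat; nra). lra. }
    destruct H. pose proof (atan_increasing _ _ H). lra. rewrite H. lra. }
  assert (0 <= INR k) by apply pos_INR. nra.
Qed.

Lemma conj_scale w l : Cconj (Cmult (RtoC l) w) = Cmult (RtoC l) (Cconj w).
Proof. unfold Cconj, Cmult, RtoC; cbn [fst snd]. f_equal; ring. Qed.

Lemma star_Omega k w l : Omega k w -> 0 <= l <= 1 -> Omega k (Cmult (RtoC l) w).
Proof.
  intros Hw Hl.
  assert (HD : 0 < INR (S k)) by (apply lt_0_INR; lia).
  assert (Hd : 0 < / INR (S k)) by (apply Rinv_0_lt_compat; auto).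
  destruct (Req_dec l 0) as [->|Hl0].
  { left. unfold Cmult, RtoC, Im, Re; cbn [fst snd]. split; [ring|]. lra. }
  destruct (scale_props w l ltac:(lra)) as [E1 E2].
  destruct Hw as [[Hy Hx]|[[Hy Hs]|[Hy Hs]]].
  - left. rewrite E1, E2, Hy. split; [ring|].
    destruct (Rle_or_lt 0 (Re w)). nra. nra.
  - right; left. rewrite E1. split. nra. pose proof (sm_scale k w l Hy ltac:(lra)). lra.
  - apply Omega_conj. rewrite conj_scale. right; left.
    destruct (scale_props (Cconj w) l ltac:(lra)) as [E3 _]. rewrite E3, im_conj.
    split. nra. pose proof (sm_scale k (Cconj w) l ltac:(rewrite im_conj; lra) ltac:(lra)). lra.
Qed.

Lemma notclos_up k z : 0 < Im z -> PI < sm k z -> exists eps, 0 < eps /\ forall u, ball z eps u -> ~ Omega k u.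
Proof.
  intros Hy Hs.
  destruct (near_pos (fun u => sm k u - PI) z) as [e1 [He1 H1]].
  { apply (continuous_minus (sm k) (fun _ => PI)). apply cont_sm; lra. apply continuous_const. } lra.
  exists (Rmin e1 (Im z)). split. apply Rmin_glb_lt; auto.
  intros u Hu.
  assert (Hu1 : 0 < Im u).
  { apply (proj1 (ball_C _ _ _)) in Hu. destruct Hu as [_ Hu]. pose proof (Rmin_r e1 (Im z)). apply Rabs_def2 in Hu. lra. }
  assert (Hu2 : PI < sm k u).
  { assert (ball z e1 u).
    { apply (proj1 (ball_C _ _ _)) in Hu. apply (proj2 (ball_C _ _ _)). pose proof (Rmin_l e1 (Im z)). destruct Hu; split; lra. }
    specialize (H1 u H). lra. }
  intros [[A _]|[[_ A]|[A _]]]; lra.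
Qed.

Lemma Omega_re k w : (1 <= k)%nat -> Omega k w -> - / INR (S k) < Re w.
Proof.
  intros Hk [[Hy Hx]|[[Hy Hs]|[Hy Hs]]]; auto.
  - destruct (Rlt_or_le (- / INR (S k)) (Re w)); auto. pose proof (left_sm k w Hk Hy H). lra.
  - destruct (Rlt_or_le (- / INR (S k)) (Re w)); auto.
    pose proof (left_sm k (Cconj w) Hk ltac:(rewrite im_conj; lra) ltac:(rewrite re_conj; auto)). lra.
Qed.

Lemma notclos_left k z : (1 <= k)%nat -> Re z < - / INR (S k) -> exists eps, 0 < eps /\ forall u, ball z eps u -> ~ Omega k u.
Proof.
  intros Hk Hx. exists (- / INR (S k) - Re z). split. lra.
  intros u Hu Hw. apply Omega_re in Hw; auto.
  apply (proj1 (ball_C _ _ _)) in Hu. destruct Hu as [Hu _]. apply Rabs_def2 in Hu. lra.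
Qed.

Definition pr (k : nat) (x : R) : R := x * (x + 1) ^ k.

Lemma fd_real k x : fd (S k) (RtoC x) = RtoC (pr k x).
Proof.
  rewrite fd_eq. unfold C1, pr.
  replace (Cplus (RtoC x) (RtoC 1)) with (RtoC (x + 1)) by (unfold Cplus, RtoC; cbn [fst snd]; f_equal; ring).
  rewrite <- RtoC_pow. unfold Cmult, RtoC; cbn [fst snd]. f_equal; ring.
Qed.

Lemma pr_incr k : (1 <= k)%nat -> forall x y, - / INR (S k) < x -> x < y -> pr k x < pr k y.
Proof.
  intros Hk x y Hx Hxy.
  destruct k as [|k']; [lia|].
  assert (HD : INR (S (S k')) = INR (S k') + 1) by apply S_INR.
  assert (HK : 1 <= INR (S k')) by (apply (le_INR 1); lia).
  assert (HD0 : 0 < INR (S (S k'))) by lra.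
  apply (incr_function (pr (S k')) (Finite (- / INR (S (S k')))) p_infty
    (fun x => (x + 1) ^ k' * (INR (S (S k')) * x + 1))); try (cbv beta iota delta [Rbar_lt]; auto; fail).
  - intros z Hz _. cbv beta iota delta [Rbar_lt] in Hz. unfold pr. auto_derive; auto. change (match k' with 0%nat => 1 | S _ => INR k' + 1 end) with (INR (S k')). rewrite HD. ring.
  - intros z Hz _. cbv beta iota delta [Rbar_lt] in Hz.
    assert (-1 < - / INR (S (S k'))).
    { assert (/ INR (S (S k')) < 1). { rewrite <- Rinv_1. apply Rinv_lt_contravar; lra. } lra. }
    apply Rlt_gt, Rmult_lt_0_compat. apply pow_lt. lra.
    apply (Rmult_lt_compat_l (INR (S (S k')))) in Hz; auto.
    replace (INR (S (S k')) * - / INR (S (S k'))) with (-1) in Hz by (field; lra). lra.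
Qed.

Lemma pr_left k : pr k (- / INR (S k)) = - rs k.
Proof.
  assert (HD : 0 < INR (S k)) by (apply lt_0_INR; lia).
  unfold pr, rs. replace (- / INR (S k) + 1) with (INR k / INR (S k)) by (rewrite S_INR in *; field; lra). ring.
Qed.

Lemma pr_gt k : (1 <= k)%nat -> forall x, - / INR (S k) < x -> - rs k < pr k x.
Proof.
  intros Hk x Hx. rewrite <- pr_left.
  apply (incr_left (pr k) (- / INR (S k)) (x + 1)).
  - apply cont_exd. unfold pr. auto_derive. auto.
  - intros a b Ha Hab Hb. apply pr_incr; auto.
  - lra.
Qed.

Lemma pr_surj k y : (1 <= k)%nat -> - rs k < y -> exists x, - / INR (S k) < x /\ pr k x = y.
Proof.
  intros Hk Hy.
  assert (HD : 0 < INR (S k)) by (apply lt_0_INR; lia).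
  assert (Hd : 0 < / INR (S k)) by (apply Rinv_0_lt_compat; auto).
  set (X := Rmax y 0 + 1).
  assert (HX : 1 <= X) by (unfold X; pose proof (Rmax_r y 0); lra).
  assert (HXy : y < pr k X).
  { unfold pr. assert (1 <= (X + 1) ^ k) by (apply pow_R1_Rle; lra).
    pose proof (Rmax_l y 0). unfold X in *. nra. }
  destruct (Ranalysis5.IVT_interv (fun x => pr k x - y) (- / INR (S k)) X) as [x [Hx Hxv]].
  - intros a _. apply continuity_pt_minus; [|apply continuity_pt_const; intros ? ?; auto].
    apply cpt_of_cont, cont_exd. unfold pr. auto_derive. auto.
  - lra.
  - rewrite pr_left. lra.
  - lra.
  - exists x. split; [|lra]. destruct Hx as [Hx _]. destruct Hx as [Hx|Hx]; auto.
    rewrite <- Hx, pr_left in Hxv. lra.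
Qed.

Lemma fd_conj k w : fd (S k) (Cconj w) = Cconj (fd (S k) w).
Proof.
  rewrite !fd_eq. unfold C1. rewrite Cmult_conj, Cpow_conj, Cplus_conj.
  replace (Cconj (RtoC 1)) with (RtoC 1) by (unfold Cconj, RtoC; cbn [fst snd]; f_equal; ring). reflexivity.
Qed.

Lemma up_rep k w : (1 <= k)%nat -> 0 < Im w -> sm k w < PI ->
  exists A, 0 < A < sm k w / INR (S k) /\ w = P A (sm k w - INR (S k) * A) /\
    fd (S k) w = pol (hh k (sm k w) A) (sm k w) /\ 0 < sm k w.
Proof.
  intros Hk Hy Hs.
  assert (HSK : INR (S k) = INR k + 1) by apply S_INR.
  assert (HK : 1 <= INR k) by (apply (le_INR 1); auto).
  destruct (P_rep w Hy) as (HA & HB & HAB & Ew).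
  set (A := th (C1 w)) in *.
  assert (Hsm : sm k w = INR (S k) * A + (th w - A)) by (unfold sm; fold A; rewrite HSK; ring).
  exists A. split; [split; auto|].
  { apply (Rmult_lt_reg_l (INR (S k))); [lra|]. replace (INR (S k) * (sm k w / INR (S k))) with (sm k w) by (field; lra). lra. }
  replace (sm k w - INR (S k) * A) with (th w - A) by lra.
  split; auto. split.
  - rewrite Ew at 1. rewrite fd_P by (apply Rgt_not_eq, sin_gt_0; lra). unfold hh.
    replace (sm k w - INR (S k) * A) with (th w - A) by lra. rewrite Hsm. reflexivity.
  - nra.
Qed.

Lemma Mf_pos k A B : 0 < A -> 0 < B -> A + B < PI -> 0 < Mf k A B.
Proof.
  intros HA HB HAB. destruct (P_props A B HA HB HAB) as (_ & _ & _ & s1 & s2 & s3).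
  unfold Mf. apply Rmult_lt_0_compat. apply Rdiv_lt_0_compat; auto. apply pow_lt, Rdiv_lt_0_compat; auto.
Qed.

Lemma up_fd_Im k w : (1 <= k)%nat -> 0 < Im w -> sm k w < PI -> 0 < Im (fd (S k) w).
Proof.
  intros Hk Hy Hs. destruct (up_rep k w Hk Hy Hs) as (A & HA & Ew & Ef & Hpos).
  rewrite Ef, Im_pol. apply Rmult_lt_0_compat.
  - unfold hh. assert (HSK : INR (S k) = INR k + 1) by apply S_INR.
    assert (1 <= INR k) by (apply (le_INR 1); auto).
    assert (INR (S k) * A < sm k w) by (apply lt_div_mul; [lra|tauto]).
    apply Mf_pos; try lra. nra.
  - apply sin_gt_0; lra.
Qed.

Lemma up_inj k w1 w2 : (1 <= k)%nat -> 0 < Im w1 -> sm k w1 < PI -> 0 < Im w2 -> sm k w2 < PI ->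
  fd (S k) w1 = fd (S k) w2 -> w1 = w2.
Proof.
  intros Hk Hy1 Hs1 Hy2 Hs2 E.
  assert (HSK : INR (S k) = INR k + 1) by apply S_INR.
  assert (HK : 1 <= INR k) by (apply (le_INR 1); auto).
  destruct (up_rep k w1 Hk Hy1 Hs1) as (A1 & HA1 & Ew1 & Ef1 & Hp1).
  destruct (up_rep k w2 Hk Hy2 Hs2) as (A2 & HA2 & Ew2 & Ef2 & Hp2).
  assert (Hh1 : 0 < hh k (sm k w1) A1).
  { unfold hh. assert (INR (S k) * A1 < sm k w1) by (apply lt_div_mul; [lra|tauto]). apply Mf_pos; nra. }
  assert (Hh2 : 0 < hh k (sm k w2) A2).
  { unfold hh. assert (INR (S k) * A2 < sm k w2) by (apply lt_div_mul; [lra|tauto]). apply Mf_pos; nra. }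
  assert (Ephi : sm k w1 = sm k w2).
  { apply (f_equal th) in E. rewrite Ef1, Ef2, !th_of_pol in E; auto; lra. }
  assert (Emod : hh k (sm k w1) A1 = hh k (sm k w2) A2).
  { apply (f_equal Cmod) in E. rewrite Ef1, Ef2, !Cmod_pol in E; auto; lra. }
  rewrite <- Ephi in Emod, HA2.
  assert (A1 = A2).
  { destruct (Rtotal_order A1 A2) as [L|[L|L]]; auto.
    - pose proof (hh_incr k (sm k w1) Hk ltac:(lra) A1 A2 ltac:(lra) L ltac:(lra)). lra.
    - pose proof (hh_incr k (sm k w1) Hk ltac:(lra) A2 A1 ltac:(lra) L ltac:(lra)). lra. }
  rewrite Ew1, Ew2, <- Ephi, H. reflexivity.
Qed.

Lemma up_surj k z : (1 <= k)%nat -> 0 < Im z -> exists w, 0 < Im w /\ sm k w < PI /\ fd (S k) w = z.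
Proof.
  intros Hk Hz.
  assert (HSK : INR (S k) = INR k + 1) by apply S_INR.
  assert (HK : 1 <= INR k) by (apply (le_INR 1); auto).
  destruct (th_bounds z Hz) as [T0 T1].
  destruct (hh_surj k (th z) (Cmod z) Hk ltac:(lra) (Cmod_pos_Im z Hz)) as [A [HA Hv]].
  assert (HDA : INR (S k) * A < th z) by (apply lt_div_mul; [lra|tauto]).
  destruct (P_props A (th z - INR (S k) * A)) as (Hi & Ht & Ht1 & _); try nra.
  exists (P A (th z - INR (S k) * A)). split; auto. split.
  - unfold sm. rewrite Ht, Ht1. rewrite HSK. nra.
  - rewrite fd_P. unfold hh in Hv. rewrite Hv.
    replace (INR (S k) * A + (th z - INR (S k) * A)) with (th z) by ring. symmetry; apply th_pol; auto.
    apply Rgt_not_eq, sin_gt_0; nra.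
Qed.

Lemma cont_open_pre (p : R -> C) (X : C -> Prop) m : continuous p m -> open X -> X (p m) ->
  exists del, 0 < del /\ forall r, Rabs (r - m) < del -> X (p r).
Proof.
  intros Hc Ho Hx.
  assert (Hl : locally m (fun r => X (p r))) by (apply Hc; apply Ho; auto).
  destruct Hl as [del H]. exists del. split; [apply cond_pos|]. intros r Hr. apply H. exact Hr.
Qed.

Lemma path_lemma (SS U V : C -> Prop) (p : R -> C) : open U -> open V -> (forall t, continuous p t) ->
  (forall t, 0 <= t <= 1 -> SS (p t)) -> (forall z, SS z -> U z \/ V z) ->
  (forall z, SS z -> U z -> V z -> False) -> U (p 0) -> V (p 1) -> False.
Proof.
  intros HU HV Hc HS Hcov Hdis H0 H1.
  set (E := fun s => 0 <= s <= 1 /\ forall r, 0 <= r <= s -> U (p r)).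
  assert (E0 : E 0).
  { split; [lra|]. intros r Hr. replace r with 0 by lra. auto. }
  assert (Eb : bound E) by (exists 1; intros x [Hx _]; lra).
  destruct (completeness E Eb (ex_intro _ 0 E0)) as [m [Hub Hlub]].
  assert (Hm0 : 0 <= m) by (apply Hub; auto).
  assert (Hm1 : m <= 1) by (apply Hlub; intros x [Hx _]; lra).
  assert (Below : forall r, 0 <= r < m -> U (p r)).
  { intros r Hr. apply NNPP. intro Hn.
    assert (is_upper_bound E r).
    { intros e [He1 He2]. destruct (Rle_or_lt e r) as [|Hlt]; auto. exfalso. apply Hn. apply He2. lra. }
    specialize (Hlub r H). lra. }
  destruct (Hcov (p m) (HS m ltac:(lra))) as [Um|Vm].
  - destruct (cont_open_pre p U m (Hc m) HU Um) as [del [Hd Hdel]].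
    destruct (Req_dec m 1) as [->|Hm1'].
    + exact (Hdis (p 1) (HS 1 ltac:(lra)) Um H1).
    + set (s' := Rmin 1 (m + del/2)).
      assert (Es' : E s').
      { split. split; [unfold s'; apply Rmin_glb; lra | apply Rmin_l].
        intros r Hr. destruct (Rlt_or_le r m) as [Hrm|Hrm]. apply Below; lra.
        apply Hdel. pose proof (Rmin_r 1 (m + del/2)). fold s' in H. rewrite Rabs_right; lra. }
      specialize (Hub s' Es'). assert (m < s') by (unfold s'; apply Rmin_glb_lt; lra). lra.
  - destruct (cont_open_pre p V m (Hc m) HV Vm) as [del [Hd Hdel]].
    destruct (Req_dec m 0) as [->|Hm0'].
    + exact (Hdis (p 0) (HS 0 ltac:(lra)) H0 Vm).
    + set (r := Rmax 0 (m - del/2)).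
      assert (Hr0 : 0 <= r) by apply Rmax_l.
      assert (Hr1 : r < m) by (unfold r; apply Rmax_lub_lt; lra).
      assert (Vr : V (p r)).
      { apply Hdel. pose proof (Rmax_r 0 (m - del/2)). fold r in H. rewrite Rabs_left; lra. }
      exact (Hdis (p r) (HS r ltac:(lra)) (Below r ltac:(lra)) Vr).
Qed.

Definition seg (z : C) (s : R) : C := ((1 - s) * fst z, (1 - s) * snd z).

Lemma seg_cont z t : continuous (seg z) t.
Proof.
  unfold seg. apply cont_pair.
  - apply (continuous_mult (fun s => 1 - s) (fun _ => fst z)); [|apply continuous_const].
    apply cont_exd. auto_derive. auto.
  - apply (continuous_mult (fun s => 1 - s) (fun _ => snd z)); [|apply continuous_const].
    apply cont_exd. auto_derive. auto.
Qed.

Lemma seg_eq z s : seg z s = Cmult (RtoC (1 - s)) z.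
Proof. unfold seg, Cmult, RtoC; destruct z; cbn [fst snd]. f_equal; ring. Qed.

Lemma Omega_0 k : Omega k (RtoC 0).
Proof.
  left. unfold RtoC, Im, Re; cbn [fst snd]. split; auto.
  assert (0 < / INR (S k)) by (apply Rinv_0_lt_compat, lt_0_INR; lia). lra.
Qed.

Lemma seg_in k z s : Omega k z -> 0 <= s <= 1 -> Omega k (seg z s).
Proof. intros Hz Hs. rewrite seg_eq. apply star_Omega; auto. lra. Qed.

Lemma seg_1 z : seg z 1 = RtoC 0.
Proof. unfold seg, RtoC. f_equal; ring. Qed.
Lemma seg_0 z : seg z 0 = z.
Proof. unfold seg. destruct z; cbn [fst snd]. f_equal; ring. Qed.

Lemma Omega_connected k : connected_set (Omega k).
Proof.
  intros U V HU HV Hcov Hdis [z1 [Hz1 Uz1]] [z2 [Hz2 Vz2]].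
  destruct (Hcov (RtoC 0) (Omega_0 k)) as [U0|V0].
  - apply (path_lemma (Omega k) V U (seg z2)); auto.
    + intro; apply seg_cont.
    + intros; apply seg_in; auto.
    + intros z Hz. destruct (Hcov z Hz); auto.
    + intros z Hz A B. apply (Hdis z); auto.
    + rewrite seg_0; auto.
    + rewrite seg_1; auto.
  - apply (path_lemma (Omega k) U V (seg z1)); auto.
    + intro; apply seg_cont.
    + intros; apply seg_in; auto.
    + rewrite seg_0; auto.
    + rewrite seg_1; auto.
Qed.

Lemma Omega_simply k : simply_connected (Omega k).
Proof.
  intros g Hg HgS Hg01.
  exists (fun p => ((1 - fst p) * fst (g (snd p)), (1 - fst p) * snd (g (snd p)))).
  split; [|split; [|split; [|split]]].
  - intros [s t]. apply cont_pair.
    + apply (continuous_mult (fun p : R * R => 1 - fst p) (fun p : R * R => fst (g (snd p)))).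
      * apply (continuous_comp (fun p : R * R => fst p) (fun x => 1 - x)). apply continuous_fst.
        apply cont_exd. auto_derive. auto.
      * apply (continuous_comp (fun p : R * R => snd p) (fun t => fst (g t))). apply continuous_snd.
        apply (continuous_comp g (fun c : C => fst c)). apply Hg. apply cont_Re.
    + apply (continuous_mult (fun p : R * R => 1 - fst p) (fun p : R * R => snd (g (snd p)))).
      * apply (continuous_comp (fun p : R * R => fst p) (fun x => 1 - x)). apply continuous_fst.
        apply cont_exd. auto_derive. auto.
      * apply (continuous_comp (fun p : R * R => snd p) (fun t => snd (g t))). apply continuous_snd.
        apply (continuous_comp g (fun c : C => snd c)). apply Hg. apply cont_Im.
  - intros s t Hs Ht. cbn [fst snd]. change (Omega k (seg (g t) s)). apply seg_in; auto.
  - intros t Ht. cbn [fst snd]. destruct (g t); cbn [fst snd]. f_equal; ring.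
  - intros t Ht. cbn [fst snd]. f_equal; ring.
  - intros s Hs. cbn [fst snd]. rewrite Hg01. reflexivity.
Qed.

Lemma Omega_open k : (1 <= k)%nat -> open (Omega k).
Proof.
  intros Hk w Hw. destruct (Omega_open_pt k w Hk Hw) as [e [He H]].
  exists (mkposreal e He). intros u Hu. apply H. exact Hu.
Qed.

Lemma w_real w : Im w = 0 -> w = RtoC (Re w).
Proof. destruct w as [x y]. unfold RtoC, Re, Im; cbn [fst snd]. intros ->. reflexivity. Qed.

Lemma fd_conj' k w : fd (S k) w = Cconj (fd (S k) (Cconj w)).
Proof. rewrite fd_conj, !Cconj_conj. reflexivity. Qed.

Lemma Im_RtoC x : Im (RtoC x) = 0.
Proof. reflexivity. Qed.
Lemma Re_RtoC x : Re (RtoC x) = x.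
Proof. reflexivity. Qed.

Lemma cut_iff k z : (1 <= k)%nat -> cut_ray (S k) z <-> Im z = 0 /\ Re z <= - rs k.
Proof. intro Hk. unfold cut_ray. rewrite rsf_pow by auto. tauto. Qed.

Lemma down_fd_Im k w : (1 <= k)%nat -> Im w < 0 -> sm k (Cconj w) < PI -> Im (fd (S k) w) < 0.
Proof.
  intros Hk Hy Hs. rewrite fd_conj', im_conj.
  pose proof (up_fd_Im k (Cconj w) Hk ltac:(rewrite im_conj; lra) Hs). lra.
Qed.

Lemma Omega_notcut k w : (1 <= k)%nat -> Omega k w -> ~ cut_ray (S k) (fd (S k) w).
Proof.
  intros Hk Hw Hc. apply (cut_iff k _ Hk) in Hc. destruct Hc as [Hc1 Hc2].
  destruct Hw as [[Hy Hx]|[[Hy Hs]|[Hy Hs]]].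
  - rewrite (w_real w Hy), fd_real, Re_RtoC in Hc2. pose proof (pr_gt k Hk (Re w) Hx). lra.
  - pose proof (up_fd_Im k w Hk Hy Hs). lra.
  - pose proof (down_fd_Im k w Hk Hy Hs). lra.
Qed.

Lemma bij3 k : (1 <= k)%nat -> bij_onto (fd (S k)) (Omega k) (fun z => ~ cut_ray (S k) z).
Proof.
  intro Hk. split; [|split].
  - intros w Hw. apply Omega_notcut; auto.
  - intros w1 w2 H1 H2 E.
    destruct H1 as [[Hy1 Hx1]|[[Hy1 Hs1]|[Hy1 Hs1]]];
    destruct H2 as [[Hy2 Hx2]|[[Hy2 Hs2]|[Hy2 Hs2]]].
    + assert (E1 := w_real w1 Hy1). assert (E2 := w_real w2 Hy2).
      rewrite E1, E2, !fd_real in E. injection E as E. rewrite E1, E2.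
      f_equal. destruct (Rtotal_order (Re w1) (Re w2)) as [L|[L|L]]; auto.
      * pose proof (pr_incr k Hk _ _ Hx1 L). lra.
      * pose proof (pr_incr k Hk _ _ Hx2 L). lra.
    + exfalso. pose proof (up_fd_Im k w2 Hk Hy2 Hs2). rewrite <- E, (w_real w1 Hy1), fd_real in H. simpl in H. lra.
    + exfalso. pose proof (down_fd_Im k w2 Hk Hy2 Hs2). rewrite <- E, (w_real w1 Hy1), fd_real in H. simpl in H. lra.
    + exfalso. pose proof (up_fd_Im k w1 Hk Hy1 Hs1). rewrite E, (w_real w2 Hy2), fd_real in H. simpl in H. lra.
    + apply up_inj with k; auto.
    + exfalso. pose proof (up_fd_Im k w1 Hk Hy1 Hs1). pose proof (down_fd_Im k w2 Hk Hy2 Hs2). rewrite E in H. lra.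
    + exfalso. pose proof (down_fd_Im k w1 Hk Hy1 Hs1). rewrite E, (w_real w2 Hy2), fd_real in H. simpl in H. lra.
    + exfalso. pose proof (down_fd_Im k w1 Hk Hy1 Hs1). pose proof (up_fd_Im k w2 Hk Hy2 Hs2). rewrite E in H. lra.
    + rewrite <- (Cconj_conj w1), <- (Cconj_conj w2). f_equal.
      apply up_inj with k; auto; try (rewrite im_conj; lra).
      rewrite !fd_conj, E. reflexivity.
  - intros z Hz.
    destruct (Rtotal_order (Im z) 0) as [Hn|[H0|Hp]].
    + destruct (up_surj k (Cconj z) Hk ltac:(rewrite im_conj; lra)) as [w [Hw1 [Hw2 Hw3]]].
      exists (Cconj w). split.
      * apply Omega_conj. right; left. auto.
      * rewrite fd_conj, Hw3, Cconj_conj. reflexivity.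
    + assert (Hr : - rs k < Re z).
      { destruct (Rlt_or_le (- rs k) (Re z)); auto. exfalso. apply Hz. apply cut_iff; auto. }
      destruct (pr_surj k (Re z) Hk Hr) as [x [Hx Hxv]].
      exists (RtoC x). split.
      * left. split; auto.
      * rewrite fd_real, Hxv. symmetry. apply w_real; auto.
    + destruct (up_surj k z Hk Hp) as [w [Hw1 [Hw2 Hw3]]]. exists w. split; auto. right; left; auto.
Qed.

Lemma gam_fd_inj k s t : (1 <= k)%nat -> 0 <= s -> 0 <= t -> fd (S k) (gam k s) = fd (S k) (gam k t) -> s = t.
Proof.
  intros Hk Hs Ht E. rewrite !fd_gam in E.
  injection E as E.
  destruct (Aof_range k s), (Aof_range k t).
  apply (Aof_inj k); auto.
  destruct (Rtotal_order (Aof k s) (Aof k t)) as [L|[L|L]]; auto.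
  - pose proof (mm_incr k Hk _ _ H L H2). lra.
  - pose proof (mm_incr k Hk _ _ H1 L H0). lra.
Qed.

Lemma bij4 k : (1 <= k)%nat -> bij_onto (fd (S k)) (image_from0 (gam k)) (cut_ray (S k)).
Proof.
  intro Hk. split; [|split].
  - intros w [t [Ht ->]]. apply cut_iff; auto. rewrite fd_gam, Im_RtoC, Re_RtoC. split; auto.
    destruct (Aof_range k t). pose proof (mm_ge k (Aof k t) Hk H H0). lra.
  - intros w1 w2 [s [Hs ->]] [t [Ht ->]] E. f_equal. apply gam_fd_inj with k; auto.
  - intros z Hz. apply cut_iff in Hz; auto. destruct Hz as [Hz1 Hz2].
    destruct (mm_surj k (- Re z) Hk ltac:(lra)) as [A [HA [HDA Hv]]].
    destruct (Aof_inv k A HA HDA) as [t [Ht [Et _]]].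
    exists (gam k t). split. exists t; auto.
    rewrite fd_gam, Et, Hv. rewrite (w_real z Hz1) at 2. f_equal. ring.
Qed.

Definition GP (k : nat) (w : C) : Prop :=
  image_from0 (gam k) w \/ (exists w', image_from0 (gam k) w' /\ w = Cconj w').

Lemma Gup_char k z : (1 <= k)%nat -> image_from0 (gam k) z ->
  z = RtoC (- / INR (S k)) \/ (0 < Im z /\ sm k z = PI).
Proof.
  intros Hk [t [Ht ->]]. destruct Ht as [Ht|<-].
  - right. apply gam_props; auto.
  - left. apply gam_0.
Qed.

Lemma shift_GP k w c : (1 <= k)%nat -> Omega k w \/ GP k w -> 0 < c -> Omega k (Cplus w (RtoC c)).
Proof.
  intros Hk Hw Hc.
  assert (Hup : forall z, image_from0 (gam k) z -> Omega k (Cplus z (RtoC c))).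
  { intros z Hz. destruct (Gup_char k z Hk Hz) as [->|[Hy Hs]].
    - left. rewrite Im_shift, Re_shift, Im_RtoC, Re_RtoC. split; auto. lra.
    - apply shift_up; auto. lra. }
  destruct Hw as [Hw|[Hw|[w' [Hw' ->]]]].
  - apply shift_Omega; auto.
  - apply Hup; auto.
  - apply Omega_conj. rewrite conj_shift, Cconj_conj. apply Hup; auto.
Qed.

Lemma GP_cut k w : (1 <= k)%nat -> GP k w -> cut_ray (S k) (fd (S k) w).
Proof.
  intros Hk [Hw|[w' [Hw' ->]]].
  - apply (bij4 k Hk); auto.
  - rewrite fd_conj. pose proof (proj1 (bij4 k Hk) w' Hw') as H.
    apply cut_iff in H; auto. apply cut_iff; auto. rewrite im_conj, re_conj. lra.
Qed.

Lemma closure_conj k z : closure_C (Omega k) z -> closure_C (Omega k) (Cconj z).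
Proof.
  intros H eps. destruct (H eps) as [w [Hw Hb]]. exists (Cconj w). split.
  apply Omega_conj; auto. apply ball_conj; auto.
Qed.

Lemma notclos_contra k z : closure_C (Omega k) z ->
  (exists eps, 0 < eps /\ forall u, ball z eps u -> ~ Omega k u) -> False.
Proof.
  intros Hc [e [He H]]. destruct (Hc (mkposreal e He)) as [w [Hw Hb]]. apply (H w); auto.
Qed.

Lemma up_boundary k z : (1 <= k)%nat -> 0 < Im z -> closure_C (Omega k) z -> ~ Omega k z ->
  image_from0 (gam k) z.
Proof.
  intros Hk Hy Hc Hn.
  assert (Hs : PI <= sm k z).
  { destruct (Rlt_or_le (sm k z) PI); auto. exfalso. apply Hn. right; left. auto. }
  destruct Hs as [Hs|Hs].
  - exfalso. apply (notclos_contra k z Hc). apply notclos_up; auto.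
  - destruct (sm_PI_gam k z Hk Hy (eq_sym Hs)) as [t [Ht ->]]. exists t. split; auto. lra.
Qed.

Lemma boundary_char k z : (1 <= k)%nat -> (boundary_C (Omega k) z <-> GP k z).
Proof.
  intro Hk. split.
  - intros [Hc Hni].
    assert (Hn : ~ Omega k z).
    { intro Hz. apply Hni. destruct (Omega_open_pt k z Hk Hz) as [e [He H]]. exists (mkposreal e He). auto. }
    destruct (Rtotal_order (Im z) 0) as [Hneg|[H0|Hp]].
    + right. exists (Cconj z). split; [|rewrite Cconj_conj; auto].
      apply up_boundary; auto. rewrite im_conj; lra. apply closure_conj; auto.
      rewrite Omega_conj; auto.
    + left.
      assert (Hx : Re z <= - / INR (S k)).
      { destruct (Rlt_or_le (- / INR (S k)) (Re z)); auto. exfalso. apply Hn. left. auto. }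
      destruct Hx as [Hx|Hx].
      * exfalso. apply (notclos_contra k z Hc). apply notclos_left; auto.
      * exists 0. split; [lra|]. rewrite gam_0, (w_real z H0), Hx. reflexivity.
    + left. apply up_boundary; auto.
  - intro Hz. split.
    + intro eps. exists (Cplus z (RtoC (eps / 2))). split.
      * apply shift_GP; auto. pose proof (cond_pos eps). lra.
      * apply (proj2 (ball_C _ _ _)). rewrite Re_shift, Im_shift. pose proof (cond_pos eps).
        replace (Re z + eps / 2 - Re z) with (eps / 2) by ring. replace (Im z - Im z) with 0 by ring.
        rewrite Rabs_R0, Rabs_right by lra. split; lra.
    + intros [eps H]. assert (Hz' : Omega k z) by (apply H; apply ball_center).
      apply (Omega_notcut k z Hk Hz'). apply GP_cut; auto.
Qed.

Theorem lemma9p11 (d : nat) (hd : (2 <= d)%nat) :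
  exists (Omega : C -> Prop) (gamma : R -> C),
    let Gup := image_from0 gamma in
    let Gdown := fun z => exists w, Gup w /\ z = Cconj w in
    let Gperp := fun z => Gup z \/ Gdown z in
    simply_connected_domain Omega /\
    (forall z, boundary_C Omega z <-> Gperp z) /\
    (* (i) *)
    (forall x : R, - / INR d < x -> Omega (RtoC x)) /\
    (* (ii) *)
    curve_to_infinity (RtoC (- / INR d)) gamma /\
    (forall t, 0 < t -> 0 < Im (gamma t)) /\
    (* (iii) *)
    bij_onto (fd d) Omega (fun z => ~ cut_ray d z) /\
    (* (iv) *)
    bij_onto (fd d) Gup (cut_ray d) /\
    (* (v) *)
    (forall w, Omega w \/ Gperp w -> forall c : R, 0 < c -> Omega (Cplus w (RtoC c))).
Proof.
  destruct d as [|k]; [lia|]. assert (Hk : (1 <= k)%nat) by lia.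
  exists (Omega k), (gam k). cbv beta zeta.
  split; [|split; [|split; [|split; [|split; [|split; [|split]]]]]].
  - split. split; [apply Omega_open; auto|]. split. exists (RtoC 0); apply Omega_0. apply Omega_connected.
    apply Omega_simply.
  - intro z. apply (boundary_char k z Hk).
  - intros x Hx. left. split; auto.
  - split; [|split; [|split]].
    + apply gam_cont.
    + apply gam_0.
    + intros s t Hs Ht E. apply gam_inj with k; auto.
    + apply gam_infty; auto.
  - intros t Ht. apply gam_props; auto.
  - apply bij3; auto.
  - apply bij4; auto.
  - intros w Hw c Hc. apply shift_GP; auto.
Qed.
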